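(* For the submodule $M=[(z-w)^2]$ of $H^2(\mathbb D^2)$, the eigenvalues of the core operator $C$ of $M$ are exactly \[ 0,\quad 1,\quad \pm\frac{2}{n+2}\ \ (n\ge1). \] In particular the second largest eigenvalue of $C$ is $2/3$.
   Context: $H^2(\mathbb D^2)$ is the Hardy space on the unit bidisk with reproducing kernel $K(\lambda,z)=\frac{1}{(1-\overline{\lambda_1}z_1)(1-\overline{\lambda_2}z_2)}$. A submodule $M$ is a closed subspace invariant under multiplication by both coordinate functions; $[q]$ is the smallest submodule containing $q$. If $K^M$ is the reproducing kernel of $M$, the core function is $G^M(\lambda,z)=K^M(\lambda,z)/K(\lambda,z)$ and the core operator $C$ on $H^2(\mathbb D^2)$ is $(Cf)(z)=\int_{\mathbb T^2}G^M(\lambda,z)f(\lambda)\,dm(\lambda)$, $m$ the normalized Lebesgue measure on $\mathbb T^2$; equivalently $C=I-R_1R_1^*-R_2R_2^*+R_1R_2R_1^*R_2^*$ on $M$ and $C=0$ on $M^\perp$, where $R_1,R_2$ are multiplication by $z,w$ restricted to $M$. *)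

(* Defs.v *)
From Stdlib Require Import Reals ClassicalEpsilon.
From Coquelicot Require Import Coquelicot.

Open Scope R_scope.

(** H^2(D^2) is identified (isometrically) with the space of square-summable
    double coefficient sequences: f(z,w) = sum_{i,j} a i j z^i w^j. *)
Definition seq2 := nat -> nat -> C.

Definition s2zero : seq2 := fun _ _ => RtoC 0.
Definition s2add (a b : seq2) : seq2 := fun i j => Cplus (a i j) (b i j).
Definition s2opp (a : seq2) : seq2 := fun i j => Copp (a i j).
Definition s2sub (a b : seq2) : seq2 := s2add a (s2opp b).
Definition s2scal (c : C) (a : seq2) : seq2 := fun i j => Cmult c (a i j).

Definition sqsum (N : nat) (a : seq2) : R :=
  sum_n (fun i => sum_n (fun j => (Cmod (a i j))^2) N) N.

Definition inH2 (a : seq2) : Prop := exists B : R, forall N, sqsum N a <= B.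

Definition ip_psum (N : nat) (a b : seq2) : C :=
  sum_n (fun i => sum_n (fun j => Cmult (a i j) (Cconj (b i j))) N) N.
Definition ip (a b : seq2) : C :=
  (real (Lim_seq (fun N => Re (ip_psum N a b))),
   real (Lim_seq (fun N => Im (ip_psum N a b)))).
Definition nrm (a : seq2) : R := sqrt (Re (ip a a)).

Definition Sz (a : seq2) : seq2 := fun i j => match i with O => RtoC 0 | S i' => a i' j end.
Definition Sw (a : seq2) : seq2 := fun i j => match j with O => RtoC 0 | S j' => a i j' end.
Definition Szadj (a : seq2) : seq2 := fun i j => a (S i) j.
Definition Swadj (a : seq2) : seq2 := fun i j => a i (S j).

Definition submodule (M : seq2 -> Prop) : Prop :=
  (forall f, M f -> inH2 f) /\
  M s2zero /\
  (forall f g, M f -> M g -> M (s2add f g)) /\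
  (forall c f, M f -> M (s2scal c f)) /\
  (forall f, inH2 f ->
     (forall eps, 0 < eps -> exists g, M g /\ nrm (s2sub f g) < eps) -> M f) /\
  (forall f, M f -> M (Sz f)) /\
  (forall f, M f -> M (Sw f)).

Definition gen_submodule (q : seq2) (f : seq2) : Prop :=
  forall M, submodule M -> M q -> M f.

(** q = (z - w)^2 = z^2 - 2 z w + w^2 *)
Definition zmw2 : seq2 := fun i j =>
  match i, j with
  | 2, 0 => RtoC 1
  | 1, 1 => RtoC (-2)
  | 0, 2 => RtoC 1
  | _, _ => RtoC 0
  end.

Definition is_proj (M : seq2 -> Prop) (f g : seq2) : Prop :=
  M g /\ forall h, M h -> ip (s2sub f g) h = RtoC 0.
Definition proj (M : seq2 -> Prop) (f : seq2) : seq2 :=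
  epsilon (inhabits s2zero) (is_proj M f).

(** core operator: on M, C = I - R1 R1^* - R2 R2^* + R1 R2 R1^* R2^*
    with R1 = Sz|_M, R2 = Sw|_M (so Ri^* = P_M Si^* on M); C = 0 on M^perp.
    Hence C f = C (P_M f). *)
Definition core_on_M (M : seq2 -> Prop) (g : seq2) : seq2 :=
  s2add
    (s2sub (s2sub g (Sz (proj M (Szadj g)))) (Sw (proj M (Swadj g))))
    (Sz (Sw (proj M (Szadj (proj M (Swadj g)))))).
Definition core_op (M : seq2 -> Prop) (f : seq2) : seq2 :=
  core_on_M M (proj M f).

Definition eigenvalue (T : seq2 -> seq2) (lam : C) : Prop :=
  exists f, inH2 f /\ f <> s2zero /\ T f = s2scal lam f.

(* Main.v *)
Require Import Defs.
From Stdlib Require Import Reals Psatz Lra Lia FunctionalExtensionality ClassicalEpsilon.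
From Coquelicot Require Import Coquelicot.
Open Scope R_scope.

Definition rsq (N : nat) (F : nat -> nat -> R) : R :=
  sum_f_R0 (fun i => sum_f_R0 (fun j => F i j) N) N.

Lemma sum_mask_min (g : nat -> R) (M N : nat) :
  sum_f_R0 (fun j => if Nat.leb j M then g j else 0) N = sum_f_R0 g (Nat.min N M).
Proof.
  induction N as [|N IH].
  - simpl. destruct (Nat.leb_spec 0 M); [|lia].
    replace (Nat.min 0 M) with 0%nat by lia. reflexivity.
  - rewrite tech5. rewrite IH. destruct (Nat.leb_spec (S N) M).
    + replace (Nat.min (S N) M) with (S N) by lia.
      replace (Nat.min N M) with N by lia. rewrite tech5. reflexivity.
    + replace (Nat.min (S N) M) with M by lia.
      replace (Nat.min N M) with M by lia. ring.
Qed.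

Lemma sum_mask (g : nat -> R) (M N : nat) : (M <= N)%nat ->
  sum_f_R0 (fun j => if Nat.leb j M then g j else 0) N = sum_f_R0 g M.
Proof. intros. rewrite sum_mask_min. f_equal. lia. Qed.

Lemma sum_zero (N : nat) : sum_f_R0 (fun _ => 0) N = 0.
Proof. induction N; simpl; [|rewrite IHN]; ring. Qed.

Definition sqmask (M : nat) (F : nat -> nat -> R) : nat -> nat -> R :=
  fun i j => if andb (Nat.leb i M) (Nat.leb j M) then F i j else 0.

Lemma rsq_mask (F : nat -> nat -> R) (M N : nat) : (M <= N)%nat ->
  rsq N (sqmask M F) = rsq M F.
Proof.
  intros H. unfold rsq, sqmask.
  rewrite <- (sum_mask (fun i => sum_f_R0 (fun j => F i j) M) M N H).
  apply sum_eq. intros i Hi. destruct (Nat.leb i M); simpl.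
  - apply sum_mask; auto.
  - apply sum_zero.
Qed.

Lemma rsq_le (F G : nat -> nat -> R) N : (forall i j, F i j <= G i j) -> rsq N F <= rsq N G.
Proof. intros H. unfold rsq. apply sum_Rle; intros. apply sum_Rle; intros. apply H. Qed.

Lemma rsq_nonneg (F : nat -> nat -> R) N : (forall i j, 0 <= F i j) -> 0 <= rsq N F.
Proof. intros H. unfold rsq. apply cond_pos_sum; intros. apply cond_pos_sum; intros. apply H. Qed.

Lemma rsq_abs (F : nat -> nat -> R) N : Rabs (rsq N F) <= rsq N (fun i j => Rabs (F i j)).
Proof.
  unfold rsq. eapply Rle_trans. apply sum_f_R0_triangle.
  apply sum_Rle; intros. apply sum_f_R0_triangle.
Qed.

Lemma rsq_minus (F G : nat -> nat -> R) N : rsq N (fun i j => F i j - G i j) = rsq N F - rsq N G.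
Proof.
  unfold rsq. rewrite <- minus_sum. apply sum_eq; intros. apply minus_sum.
Qed.

Lemma rsq_plus (F G : nat -> nat -> R) N : rsq N (fun i j => F i j + G i j) = rsq N F + rsq N G.
Proof.
  unfold rsq. rewrite <- plus_sum. apply sum_eq; intros. apply plus_sum.
Qed.

Lemma rsq_ext (F G : nat -> nat -> R) N : (forall i j, F i j = G i j) -> rsq N F = rsq N G.
Proof. intros H. unfold rsq. apply sum_eq; intros. apply sum_eq; intros. apply H. Qed.

Lemma rsq_mono (F : nat -> nat -> R) M N : (forall i j, 0 <= F i j) -> (M <= N)%nat ->
  rsq M F <= rsq N F.
Proof.
  intros H HMN. rewrite <- (rsq_mask F M N HMN). apply rsq_le.
  intros i j. unfold sqmask. destruct (andb (Nat.leb i M) (Nat.leb j M)); [lra| apply H].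
Qed.

Definition bounded2 (F : nat -> nat -> R) := exists B, forall N, rsq N F <= B.

Lemma mono_lim (F : nat -> nat -> R) : (forall i j, 0 <= F i j) -> bounded2 F ->
  ex_finite_lim_seq (fun N => rsq N F).
Proof.
  intros H [B HB]. apply ex_finite_lim_seq_incr with B; auto.
  intros n. apply rsq_mono; auto.
Qed.

Lemma mono_le_lim (F : nat -> nat -> R) N : (forall i j, 0 <= F i j) -> bounded2 F ->
  rsq N F <= real (Lim_seq (fun n => rsq n F)).
Proof.
  intros H HB. apply (is_lim_seq_incr_compare (fun n => rsq n F)).
  apply Lim_seq_correct'. apply mono_lim; auto.
  intros n. apply rsq_mono; auto.
Qed.

Lemma lim_le_bound (u : nat -> R) (B : R) : ex_finite_lim_seq u -> (forall n, u n <= B) ->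
  real (Lim_seq u) <= B.
Proof.
  intros He H. assert (Hl := Lim_seq_correct' u He).
  assert (Hc : is_lim_seq (fun _ : nat => B) B) by apply is_lim_seq_const.
  pose proof (is_lim_seq_le u (fun _ => B) _ _ H Hl Hc). simpl in H0. exact H0.
Qed.

Lemma rsq_diff_bound (F G : nat -> nat -> R) M N :
  (forall i j, Rabs (F i j) <= G i j) -> (M <= N)%nat ->
  Rabs (rsq N F - rsq M F) <= rsq N G - rsq M G.
Proof.
  intros H HMN. rewrite <- (rsq_mask F M N HMN), <- (rsq_mask G M N HMN).
  rewrite <- !rsq_minus. eapply Rle_trans. apply rsq_abs. apply rsq_le.
  intros i j. unfold sqmask. destruct (andb (Nat.leb i M) (Nat.leb j M)).
  - rewrite Rminus_diag, Rabs_R0. lra.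
  - rewrite !Rminus_0_r. apply H.
Qed.

Lemma dom_lim (F G : nat -> nat -> R) :
  (forall i j, Rabs (F i j) <= G i j) -> bounded2 G ->
  ex_finite_lim_seq (fun N => rsq N F).
Proof.
  intros H HB.
  assert (HG0 : forall i j, 0 <= G i j).
  { intros i j. eapply Rle_trans; [apply Rabs_pos|apply H]. }
  assert (Hc := mono_lim G HG0 HB). apply ex_lim_seq_cauchy_corr in Hc.
  apply ex_lim_seq_cauchy_corr. intros eps. destruct (Hc eps) as [N0 HN0].
  exists N0. intros n m Hn Hm. destruct (Nat.le_ge_cases m n) as [Hmn|Hmn].
  - eapply Rle_lt_trans. apply rsq_diff_bound; eauto.
    specialize (HN0 n m Hn Hm). eapply Rle_lt_trans; [|exact HN0].
    apply Rle_abs.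
  - rewrite Rabs_minus_sym. eapply Rle_lt_trans. apply rsq_diff_bound; eauto.
    specialize (HN0 m n Hm Hn). eapply Rle_lt_trans; [|exact HN0].
    apply Rle_abs.
Qed.
Definition rtri (N : nat) (F : nat -> nat -> R) : R :=
  sum_f_R0 (fun d => sum_f_R0 (fun i => F i (d - i)%nat) d) N.
Definition trimask (N : nat) (F : nat -> nat -> R) : nat -> nat -> R :=
  fun i j => if Nat.leb (i + j) N then F i j else 0.
Definition rT (N : nat) (F : nat -> nat -> R) : R :=
  sum_f_R0 (fun i => sum_f_R0 (fun j => F i j) (N - i)) N.

Lemma rT_rtri N F : rT N F = rtri N F.
Proof.
  induction N as [|N IH].
  - reflexivity.
  - unfold rT, rtri in *. rewrite tech5. rewrite (tech5 _ N).
    rewrite <- IH.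
    simpl (sum_f_R0 _ 0).
    rewrite tech5. replace (S N - S N)%nat with 0%nat by lia.
    transitivity (sum_f_R0 (fun i => sum_f_R0 (fun j => F i j) (N - i)) N +
                  sum_f_R0 (fun i => F i (S N - i)%nat) N + F (S N) 0%nat); [|ring].
    rewrite <- plus_sum. f_equal. apply sum_eq. intros i Hi.
    replace (S N - i)%nat with (S (N - i)) by lia. rewrite tech5. reflexivity.
Qed.

Lemma rtri_sq N F : rtri N F = rsq N (trimask N F).
Proof.
  rewrite <- rT_rtri. unfold rT, rsq, trimask. apply sum_eq. intros i Hi.
  rewrite <- (sum_mask (fun j => F i j) (N - i) N) by lia.
  apply sum_eq. intros j Hj. destruct (Nat.leb_spec (i+j) N), (Nat.leb_spec j (N - i)); try lia; auto.
Qed.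

Lemma rsq_le_rtri (F : nat -> nat -> R) N : (forall i j, 0 <= F i j) ->
  rsq N F <= rtri (2 * N) F.
Proof.
  intros H. rewrite rtri_sq. rewrite <- (rsq_mask F N (2*N)) by lia.
  apply rsq_le. intros i j. unfold sqmask, trimask.
  destruct (Nat.leb_spec i N), (Nat.leb_spec j N), (Nat.leb_spec (i+j) (2*N)); simpl;
    try lia; try lra; apply H.
Qed.

Lemma rtri_le_rsq (F : nat -> nat -> R) N : (forall i j, 0 <= F i j) ->
  rtri N F <= rsq N F.
Proof.
  intros H. rewrite rtri_sq. apply rsq_le. intros i j. unfold trimask.
  destruct (Nat.leb (i+j) N); [lra|apply H].
Qed.

Lemma rsq_rtri_diff (F G : nat -> nat -> R) N :
  (forall i j, Rabs (F i j) <= G i j) ->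
  Rabs (rsq N F - rtri N F) <= rsq N G - rsq (Nat.div2 N) G.
Proof.
  intros H. rewrite rtri_sq.
  rewrite <- (rsq_mask G (Nat.div2 N) N) by (apply Nat.div2_decr; lia).
  rewrite <- !rsq_minus. eapply Rle_trans. apply rsq_abs. apply rsq_le.
  intros i j. unfold sqmask, trimask.
  pose proof (Nat.div2_odd N) as Hd.
  destruct (Nat.leb_spec (i+j) N); destruct (Nat.leb_spec i (Nat.div2 N));
   destruct (Nat.leb_spec j (Nat.div2 N)); simpl;
   rewrite ?Rminus_diag, ?Rminus_0_r, ?Rabs_R0;
   first [ lra | apply H | (eapply Rle_trans; [apply Rabs_pos|apply H])
         | (exfalso; destruct (Nat.odd N); simpl in Hd; lia) ].
Qed.

Lemma tri_zero_lim (F G : nat -> nat -> R) :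
  (forall i j, Rabs (F i j) <= G i j) -> bounded2 G -> (forall N, rtri N F = 0) ->
  is_lim_seq (fun N => rsq N F) 0.
Proof.
  intros H HB Ht.
  assert (HG0 : forall i j, 0 <= G i j).
  { intros i j. eapply Rle_trans; [apply Rabs_pos|apply H]. }
  assert (Hc := mono_lim G HG0 HB). apply ex_lim_seq_cauchy_corr in Hc.
  apply is_lim_seq_Reals. intros eps Heps.
  destruct (Hc (mkposreal eps Heps)) as [N0 HN0]. simpl in HN0.
  exists (2 * N0)%nat. intros n Hn. unfold R_dist. rewrite Rminus_0_r.
  pose proof (rsq_rtri_diff F G n H) as Hd. rewrite Ht, Rminus_0_r in Hd.
  eapply Rle_lt_trans. apply Hd.
  assert (Hn2 : (N0 <= Nat.div2 n)%nat).
  { pose proof (Nat.div2_odd n). destruct (Nat.odd n); simpl in *; lia. }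
  specialize (HN0 n (Nat.div2 n) ltac:(lia) Hn2).
  eapply Rle_lt_trans; [|exact HN0]. apply Rle_abs.
Qed.
Definition nsq (c : C) : R := fst c ^ 2 + snd c ^ 2.
Lemma nsq_nonneg c : 0 <= nsq c.
Proof. unfold nsq. nra. Qed.

Lemma sum_n_R (g : nat -> R) N : sum_n g N = sum_f_R0 g N.
Proof. apply sum_n_Reals. Qed.

Lemma sqsum_rsq N a : sqsum N a = rsq N (fun i j => nsq (a i j)).
Proof.
  unfold sqsum, rsq. rewrite sum_n_R. apply sum_eq. intros i _.
  rewrite sum_n_R. apply sum_eq. intros j _. unfold Cmod, nsq.
  rewrite pow2_sqrt; [reflexivity|]. nra.
Qed.

Lemma Re_sum_n (f : nat -> C) N : Re (sum_n f N) = sum_f_R0 (fun i => Re (f i)) N.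
Proof.
  induction N. - rewrite sum_O. reflexivity.
  - rewrite sum_Sn. simpl sum_f_R0. rewrite <- IHN. reflexivity.
Qed.
Lemma Im_sum_n (f : nat -> C) N : Im (sum_n f N) = sum_f_R0 (fun i => Im (f i)) N.
Proof.
  induction N. - rewrite sum_O. reflexivity.
  - rewrite sum_Sn. simpl sum_f_R0. rewrite <- IHN. reflexivity.
Qed.

Definition ipR (a b : seq2) i j : R := fst (a i j) * fst (b i j) + snd (a i j) * snd (b i j).
Definition ipI (a b : seq2) i j : R := snd (a i j) * fst (b i j) - fst (a i j) * snd (b i j).

Lemma Re_psum N a b : Re (ip_psum N a b) = rsq N (ipR a b).
Proof.
  unfold ip_psum, rsq. rewrite Re_sum_n. apply sum_eq. intros i _.
  rewrite Re_sum_n. apply sum_eq. intros j _. unfold ipR. simpl. ring.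
Qed.
Lemma Im_psum N a b : Im (ip_psum N a b) = rsq N (ipI a b).
Proof.
  unfold ip_psum, rsq. rewrite Im_sum_n. apply sum_eq. intros i _.
  rewrite Im_sum_n. apply sum_eq. intros j _. unfold ipI. simpl. ring.
Qed.

Definition nsq2 (a : seq2) : nat -> nat -> R := fun i j => nsq (a i j).

Lemma inH2_b a : inH2 a <-> bounded2 (nsq2 a).
Proof.
  unfold inH2, bounded2. split; intros [B HB]; exists B; intros N; specialize (HB N);
  rewrite sqsum_rsq in *; exact HB.
Qed.

Lemma rsq_scal (F : nat -> nat -> R) c N : rsq N (fun i j => c * F i j) = c * rsq N F.
Proof.
  unfold rsq. rewrite scal_sum. apply sum_eq; intros. rewrite Rmult_comm, scal_sum. apply sum_eq; intros. ring.
Qed.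

Lemma bounded2_lin (F G : nat -> nat -> R) (c d : R) :
  0 <= c -> 0 <= d ->
  bounded2 F -> bounded2 G -> bounded2 (fun i j => c * F i j + d * G i j).
Proof.
  intros Hc Hd [B1 H1] [B2 H2]. exists (c * B1 + d * B2). intros N.
  rewrite rsq_plus, (rsq_scal F), (rsq_scal G). specialize (H1 N). specialize (H2 N). nra.
Qed.

Lemma bounded2_le (F G : nat -> nat -> R) : (forall i j, F i j <= G i j) -> bounded2 G -> bounded2 F.
Proof. intros H [B HB]. exists B. intros N. eapply Rle_trans; [apply rsq_le, H|apply HB]. Qed.
Lemma sum_mono_S (g : nat -> R) N : (forall i, 0 <= g i) -> sum_f_R0 g N <= sum_f_R0 g (S N).
Proof. intros H. rewrite tech5. specialize (H (S N)). lra. Qed.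

Lemma bounded2_shR (F : nat -> nat -> R) : (forall i j, 0 <= F i j) -> bounded2 F ->
  bounded2 (fun i j => match i with O => 0 | S i' => F i' j end).
Proof.
  intros H0 [B HB]. exists B. intros N. destruct N as [|n].
  - unfold rsq. simpl. specialize (HB 0%nat). unfold rsq in HB. simpl in HB.
    pose proof (H0 0%nat 0%nat). lra.
  - unfold rsq. rewrite decomp_sum by lia. simpl pred.
    rewrite sum_zero. rewrite Rplus_0_l. eapply Rle_trans; [|apply (HB (S n))].
    unfold rsq. apply sum_mono_S. intros i. apply cond_pos_sum. intros; apply H0.
Qed.

Lemma bounded2_shL (F : nat -> nat -> R) : (forall i j, 0 <= F i j) -> bounded2 F ->
  bounded2 (fun i j => F (S i) j).
Proof.
  intros H0 [B HB]. exists B. intros N. eapply Rle_trans; [|apply (HB (S N))].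
  unfold rsq. rewrite (decomp_sum _ (S N)) by lia. simpl pred.
  assert (0 <= sum_f_R0 (fun j => F 0%nat j) (S N)) by (apply cond_pos_sum; intros; apply H0).
  cut (sum_f_R0 (fun i => sum_f_R0 (fun j => F (S i) j) N) N <=
       sum_f_R0 (fun i => sum_f_R0 (fun j => F (S i) j) (S N)) N); [lra|].
  apply sum_Rle. intros. apply sum_mono_S. intros; apply H0.
Qed.

Lemma rsq_transpose (F : nat -> nat -> R) N : rsq N (fun i j => F j i) = rsq N F.
Proof.
  unfold rsq. rewrite <- sum_n_R. rewrite (sum_n_ext _ (fun i => sum_n (fun j => F j i) N)).
  2:{ intros. rewrite sum_n_R. reflexivity. }
  rewrite (sum_n_switch (fun i j => F j i)). rewrite sum_n_R. apply sum_eq. intros.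
  rewrite sum_n_R. reflexivity.
Qed.

Lemma bounded2_tr (F : nat -> nat -> R) : bounded2 F -> bounded2 (fun i j => F j i).
Proof. intros [B HB]. exists B. intros N. rewrite rsq_transpose. apply HB. Qed.

Lemma inH2_add a b : inH2 a -> inH2 b -> inH2 (s2add a b).
Proof.
  rewrite !inH2_b. intros Ha Hb. apply (bounded2_le _ (fun i j => 2 * nsq2 a i j + 2 * nsq2 b i j)).
  - intros i j. unfold nsq2, nsq, s2add. simpl.
    pose proof (pow2_ge_0 (fst (a i j) - fst (b i j))). pose proof (pow2_ge_0 (snd (a i j) - snd (b i j))). nra.
  - apply bounded2_lin; auto; lra.
Qed.

Lemma inH2_scal c a : inH2 a -> inH2 (s2scal c a).
Proof.
  rewrite !inH2_b. intros Ha. apply (bounded2_le _ (fun i j => nsq c * nsq2 a i j + 0 * nsq2 a i j)).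
  - intros i j. unfold nsq2, nsq, s2scal. simpl. right. ring.
  - apply bounded2_lin; auto; try lra. apply nsq_nonneg.
Qed.

Lemma inH2_opp a : inH2 a -> inH2 (s2opp a).
Proof.
  rewrite !inH2_b. intros Ha. apply (bounded2_le _ (nsq2 a)); auto.
  intros i j. unfold nsq2, nsq, s2opp. simpl. right. ring.
Qed.

Lemma inH2_sub a b : inH2 a -> inH2 b -> inH2 (s2sub a b).
Proof. intros. apply inH2_add; auto. apply inH2_opp; auto. Qed.

Lemma nsq2_nonneg a i j : 0 <= nsq2 a i j.
Proof. apply nsq_nonneg. Qed.

Lemma inH2_Sz a : inH2 a -> inH2 (Sz a).
Proof.
  rewrite !inH2_b. intros Ha. apply (bounded2_le _ (fun i j => match i with O => 0 | S i' => nsq2 a i' j end)).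
  - intros i j. unfold nsq2, nsq, Sz. destruct i; simpl; lra.
  - apply bounded2_shR; auto. apply nsq2_nonneg.
Qed.

Lemma inH2_Szadj a : inH2 a -> inH2 (Szadj a).
Proof.
  rewrite !inH2_b. intros Ha. apply (bounded2_le _ (fun i j => nsq2 a (S i) j)).
  - intros i j. unfold nsq2, Szadj. lra.
  - apply bounded2_shL; auto. apply nsq2_nonneg.
Qed.

Lemma inH2_Sw a : inH2 a -> inH2 (Sw a).
Proof.
  rewrite !inH2_b. intros Ha.
  apply (bounded2_le _ (fun i j => (fun i j => match i with O => 0 | S i' => nsq2 a j i' end) j i)).
  - intros i j. unfold nsq2, nsq, Sw. destruct j; simpl; lra.
  - apply bounded2_tr. apply (bounded2_shR (fun i j => nsq2 a j i)). intros; apply nsq2_nonneg.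
    apply (bounded2_tr (nsq2 a)); auto.
Qed.

Lemma inH2_Swadj a : inH2 a -> inH2 (Swadj a).
Proof.
  rewrite !inH2_b. intros Ha.
  apply (bounded2_le _ (fun i j => (fun i j => nsq2 a j (S i)) j i)).
  - intros i j. unfold nsq2, Swadj. lra.
  - apply bounded2_tr. apply (bounded2_shL (fun i j => nsq2 a j i)). intros; apply nsq2_nonneg.
    apply (bounded2_tr (nsq2 a)); auto.
Qed.

Lemma inH2_ext a b : (forall i j, a i j = b i j) -> inH2 a -> inH2 b.
Proof. intros H. replace b with a; auto. apply functional_extensionality; intros i; apply functional_extensionality; intros; auto. Qed.

Lemma ipR_bound a b i j : Rabs (ipR a b i j) <= (1/2) * nsq2 a i j + (1/2) * nsq2 b i j.
Proof.
  unfold ipR, nsq2, nsq. apply Rabs_le.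
  pose proof (pow2_ge_0 (fst (a i j) - fst (b i j))). pose proof (pow2_ge_0 (snd (a i j) - snd (b i j))).
  pose proof (pow2_ge_0 (fst (a i j) + fst (b i j))). pose proof (pow2_ge_0 (snd (a i j) + snd (b i j))).
  split; nra.
Qed.
Lemma ipI_bound a b i j : Rabs (ipI a b i j) <= (1/2) * nsq2 a i j + (1/2) * nsq2 b i j.
Proof.
  unfold ipI, nsq2, nsq. apply Rabs_le.
  pose proof (pow2_ge_0 (snd (a i j) - fst (b i j))). pose proof (pow2_ge_0 (fst (a i j) + snd (b i j))).
  pose proof (pow2_ge_0 (snd (a i j) + fst (b i j))). pose proof (pow2_ge_0 (fst (a i j) - snd (b i j))).
  split; nra.
Qed.

Lemma ipR_ex a b : inH2 a -> inH2 b -> ex_finite_lim_seq (fun N => rsq N (ipR a b)).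
Proof.
  rewrite !inH2_b. intros Ha Hb. apply (dom_lim _ _ (ipR_bound a b)).
  apply bounded2_lin; auto; lra.
Qed.
Lemma ipI_ex a b : inH2 a -> inH2 b -> ex_finite_lim_seq (fun N => rsq N (ipI a b)).
Proof.
  rewrite !inH2_b. intros Ha Hb. apply (dom_lim _ _ (ipI_bound a b)).
  apply bounded2_lin; auto; lra.
Qed.

Lemma Re_ip a b : Re (ip a b) = real (Lim_seq (fun N => rsq N (ipR a b))).
Proof. unfold ip. simpl. f_equal. apply Lim_seq_ext. intros. apply Re_psum. Qed.
Lemma Im_ip a b : Im (ip a b) = real (Lim_seq (fun N => rsq N (ipI a b))).
Proof. unfold ip. simpl. f_equal. apply Lim_seq_ext. intros. apply Im_psum. Qed.

Lemma ipR_self a : ipR a a = nsq2 a.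
Proof. apply functional_extensionality; intros i; apply functional_extensionality; intros j.
  unfold ipR, nsq2, nsq. ring. Qed.

Lemma sum_ge_term (g : nat -> R) k N : (forall i, 0 <= g i) -> (k <= N)%nat -> g k <= sum_f_R0 g N.
Proof.
  intros H. induction N; intros Hk.
  - replace k with 0%nat by lia. simpl. lra.
  - destruct (Nat.eq_dec k (S N)). + subst. rewrite tech5. pose proof (cond_pos_sum g N H). lra.
    + rewrite tech5. specialize (H (S N)). pose proof (IHN ltac:(lia)). lra.
Qed.

Lemma rsq_ge_term (F : nat -> nat -> R) i j N : (forall i j, 0 <= F i j) -> (i <= N)%nat -> (j <= N)%nat ->
  F i j <= rsq N F.
Proof.
  intros H Hi Hj. unfold rsq. eapply Rle_trans.
  2:{ apply (sum_ge_term (fun i => sum_f_R0 (fun j => F i j) N) i N); auto.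
      intros; apply cond_pos_sum; intros; apply H. }
  apply (sum_ge_term (fun j => F i j)); auto.
Qed.

Lemma coef_le_ip a i j : inH2 a -> nsq (a i j) <= Re (ip a a).
Proof.
  intros Ha. rewrite Re_ip, ipR_self. apply inH2_b in Ha.
  eapply Rle_trans. apply (rsq_ge_term (nsq2 a) i j (Nat.max i j)); try lia. apply nsq2_nonneg.
  apply mono_le_lim; auto. apply nsq2_nonneg.
Qed.

Lemma ip_self_zero a : inH2 a -> Re (ip a a) = 0 -> a = s2zero.
Proof.
  intros Ha H0. apply functional_extensionality; intros i; apply functional_extensionality; intros j.
  pose proof (coef_le_ip a i j Ha) as H. rewrite H0 in H. unfold nsq in H.
  destruct (a i j) as [x y]. simpl in H. unfold s2zero, RtoC.
  f_equal; nra.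
Qed.

Lemma lim_minus (u v w : nat -> R) : ex_finite_lim_seq u -> ex_finite_lim_seq v ->
  (forall n, w n = u n - v n) -> real (Lim_seq w) = real (Lim_seq u) - real (Lim_seq v).
Proof.
  intros [lu Hu] [lv Hv] Hw.
  rewrite (is_lim_seq_unique u lu Hu), (is_lim_seq_unique v lv Hv).
  rewrite (Lim_seq_ext w (fun n => u n - v n)) by auto.
  rewrite (is_lim_seq_unique _ _ (is_lim_seq_minus' u v lu lv Hu Hv)). reflexivity.
Qed.

Lemma ip_zero_tri a k : inH2 a -> inH2 k ->
  (forall N, rtri N (ipR a k) = 0) -> (forall N, rtri N (ipI a k) = 0) -> ip a k = RtoC 0.
Proof.
  intros Ha Hk H1 H2. apply inH2_b in Ha. apply inH2_b in Hk.
  assert (L1 := tri_zero_lim _ _ (ipR_bound a k) ltac:(apply bounded2_lin; auto; lra) H1).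
  assert (L2 := tri_zero_lim _ _ (ipI_bound a k) ltac:(apply bounded2_lin; auto; lra) H2).
  apply injective_projections.
  - change (Re (ip a k) = 0). rewrite Re_ip. rewrite (is_lim_seq_unique _ _ L1). reflexivity.
  - change (Im (ip a k) = 0). rewrite Im_ip. rewrite (is_lim_seq_unique _ _ L2). reflexivity.
Qed.
Open Scope C_scope.
Ltac cpair := apply injective_projections; simpl; field.

Fixpoint csum (f : nat -> C) (n : nat) : C :=
  match n with O => f O | S m => csum f m + f (S m) end.

Lemma csum_S f n : csum f (S n) = csum f n + f (S n).
Proof. reflexivity. Qed.

Lemma csum_ext f g n : (forall i, (i <= n)%nat -> f i = g i) -> csum f n = csum g n.
Proof. induction n; intros H; simpl. apply H; lia. rewrite IHn by (intros; apply H; lia). rewrite H by lia. reflexivity. Qed.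

Lemma csum_plus f g n : csum (fun i => f i + g i) n = csum f n + csum g n.
Proof. induction n; simpl. reflexivity. rewrite IHn. ring. Qed.
Lemma csum_minus f g n : csum (fun i => f i - g i) n = csum f n - csum g n.
Proof. induction n; simpl. reflexivity. rewrite IHn. ring. Qed.
Lemma csum_scal c f n : csum (fun i => c * f i) n = c * csum f n.
Proof. induction n; simpl. reflexivity. rewrite IHn. ring. Qed.
Lemma csum_zero n : csum (fun _ => RtoC 0) n = RtoC 0.
Proof. induction n; simpl. reflexivity. rewrite IHn. ring. Qed.
Lemma csum_first f n : csum f (S n) = f O + csum (fun i => f (S i)) n.
Proof. induction n. simpl. reflexivity. change (csum f (S (S n))) with (csum f (S n) + f (S (S n))).
  rewrite IHn. simpl. ring. Qed.

Lemma csum_const c n : csum (fun _ => c) n = RtoC (INR n + 1) * c.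
Proof. induction n. simpl. cpair. rewrite csum_S, IHn, S_INR. cpair. Qed.
Lemma csum_lin1 c n : csum (fun i => RtoC (INR i) * c) n = RtoC (INR n * (INR n + 1) / 2) * c.
Proof. induction n. simpl. cpair. rewrite csum_S, IHn, S_INR. cpair. Qed.
Lemma csum_lin2 c n : csum (fun i => RtoC (INR i * INR i) * c) n =
   RtoC (INR n * (INR n + 1) * (2 * INR n + 1) / 6) * c.
Proof. induction n. simpl. cpair. rewrite csum_S, IHn, S_INR. cpair. Qed.

Lemma Re_csum f n : Re (csum f n) = sum_f_R0 (fun i => Re (f i)) n.
Proof. induction n; simpl. reflexivity. rewrite <- IHn. reflexivity. Qed.
Lemma Im_csum f n : Im (csum f n) = sum_f_R0 (fun i => Im (f i)) n.
Proof. induction n; simpl. reflexivity. rewrite <- IHn. reflexivity. Qed.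

Lemma Cconj_RtoC r : Cconj (RtoC r) = RtoC r.
Proof. unfold Cconj, RtoC. simpl. f_equal. ring. Qed.

Lemma csum_conj k n : Cconj (csum k n) = csum (fun i => Cconj (k i)) n.
Proof. induction n; simpl. reflexivity. rewrite Cplus_conj, IHn. reflexivity. Qed.

Lemma csum_conj_lin al be k n :
  csum (fun i => (al + RtoC (INR i) * be) * Cconj (k i)) n =
  al * Cconj (csum k n) + be * Cconj (csum (fun i => RtoC (INR i) * k i) n).
Proof.
  rewrite !csum_conj.
  rewrite (csum_ext (fun i => Cconj (RtoC (INR i) * k i)) (fun i => RtoC (INR i) * Cconj (k i)))
    by (intros; rewrite Cmult_conj, Cconj_RtoC; reflexivity).
  rewrite <- !csum_scal, <- csum_plus. apply csum_ext. intros. ring.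
Qed.

Definition Ab (f : seq2) (d : nat) : C := csum (fun i => f i (d - i)%nat) d.
Definition Bb (f : seq2) (d : nat) : C := csum (fun i => RtoC (INR i) * f i (d - i)%nat) d.
Definition Mc (f : seq2) : Prop := inH2 f /\ forall d, Ab f d = 0 /\ Bb f d = 0.
Lemma Ab_add f g d : Ab (s2add f g) d = Ab f d + Ab g d.
Proof. unfold Ab, s2add. apply csum_plus. Qed.
Lemma Bb_add f g d : Bb (s2add f g) d = Bb f d + Bb g d.
Proof. unfold Bb, s2add. rewrite <- csum_plus. apply csum_ext; intros. ring. Qed.
Lemma Ab_scal c f d : Ab (s2scal c f) d = c * Ab f d.
Proof. unfold Ab, s2scal. apply csum_scal. Qed.
Lemma Bb_scal c f d : Bb (s2scal c f) d = c * Bb f d.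
Proof. unfold Bb, s2scal. rewrite <- csum_scal. apply csum_ext; intros. ring. Qed.
Lemma csum_opp g n : csum (fun i => - g i) n = - csum g n.
Proof. induction n; simpl. reflexivity. rewrite IHn. ring. Qed.
Lemma Ab_opp f d : Ab (s2opp f) d = - Ab f d.
Proof. unfold Ab, s2opp. apply csum_opp. Qed.
Lemma Bb_opp f d : Bb (s2opp f) d = - Bb f d.
Proof. unfold Bb, s2opp. rewrite <- csum_opp. apply csum_ext; intros. ring. Qed.
Lemma Ab_sub f g d : Ab (s2sub f g) d = Ab f d - Ab g d.
Proof. unfold s2sub. rewrite Ab_add, Ab_opp. ring. Qed.
Lemma Bb_sub f g d : Bb (s2sub f g) d = Bb f d - Bb g d.
Proof. unfold s2sub. rewrite Bb_add, Bb_opp. ring. Qed.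

Lemma Ab_Sz0 f : Ab (Sz f) 0 = 0.
Proof. reflexivity. Qed.
Lemma Bb_Sz0 f : Bb (Sz f) 0 = 0.
Proof. unfold Bb. simpl. ring. Qed.
Lemma Ab_SzS f e : Ab (Sz f) (S e) = Ab f e.
Proof. unfold Ab. rewrite csum_first. simpl. rewrite Cplus_0_l. reflexivity. Qed.
Lemma Bb_SzS f e : Bb (Sz f) (S e) = Bb f e + Ab f e.
Proof. unfold Bb, Ab. rewrite csum_first. change (Sz f 0%nat (S e - 0)%nat) with (RtoC 0). rewrite <- csum_plus.
  rewrite Cmult_0_r, Cplus_0_l. apply csum_ext. intros i _.
  change (Sz f (S i) (S e - S i)%nat) with (f i (e - i)%nat). rewrite S_INR. cpair. Qed.
Lemma Ab_Sw0 f : Ab (Sw f) 0 = 0.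
Proof. reflexivity. Qed.
Lemma Bb_Sw0 f : Bb (Sw f) 0 = 0.
Proof. unfold Bb. simpl. ring. Qed.
Lemma Ab_SwS f e : Ab (Sw f) (S e) = Ab f e.
Proof. unfold Ab. rewrite csum_S. replace (S e - S e)%nat with 0%nat by lia. change (Sw f (S e) 0%nat) with (RtoC 0).
  rewrite Cplus_0_r. apply csum_ext. intros i Hi. replace (S e - i)%nat with (S (e - i)) by lia. reflexivity. Qed.
Lemma Bb_SwS f e : Bb (Sw f) (S e) = Bb f e.
Proof. unfold Bb. rewrite csum_S. replace (S e - S e)%nat with 0%nat by lia. change (Sw f (S e) 0%nat) with (RtoC 0).
  rewrite Cmult_0_r, Cplus_0_r. apply csum_ext. intros i Hi. replace (S e - i)%nat with (S (e - i)) by lia. reflexivity. Qed.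

Lemma Re_Cmult_RtoC (w : R) (z : C) : Re (RtoC w * z) = (w * Re z)%R.
Proof. destruct z; simpl. ring. Qed.
Lemma Im_Cmult_RtoC (w : R) (z : C) : Im (RtoC w * z) = (w * Im z)%R.
Proof. destruct z; simpl. ring. Qed.

Lemma abs_fst_nrm x i j : inH2 x -> Rabs (fst (x i j)) <= nrm x.
Proof.
  intros H. unfold nrm. rewrite <- sqrt_Rsqr_abs. apply sqrt_le_1_alt.
  eapply Rle_trans; [|apply (coef_le_ip x i j H)]. unfold nsq, Rsqr. pose proof (pow2_ge_0 (snd (x i j))). nra.
Qed.
Lemma abs_snd_nrm x i j : inH2 x -> Rabs (snd (x i j)) <= nrm x.
Proof.
  intros H. unfold nrm. rewrite <- sqrt_Rsqr_abs. apply sqrt_le_1_alt.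
  eapply Rle_trans; [|apply (coef_le_ip x i j H)]. unfold nsq, Rsqr. pose proof (pow2_ge_0 (fst (x i j))). nra.
Qed.

Lemma wbound_Re x (w : nat -> R) (k : nat -> nat) d : inH2 x ->
  Rabs (Re (csum (fun i => RtoC (w i) * x i (k i)) d)) <= sum_f_R0 (fun i => Rabs (w i)) d * nrm x.
Proof.
  intros H. rewrite Re_csum. eapply Rle_trans. apply sum_f_R0_triangle.
  rewrite Rmult_comm, scal_sum. apply sum_Rle. intros i _. rewrite Re_Cmult_RtoC, Rabs_mult.
  apply Rmult_le_compat_l. apply Rabs_pos. apply abs_fst_nrm; auto.
Qed.
Lemma wbound_Im x (w : nat -> R) (k : nat -> nat) d : inH2 x ->
  Rabs (Im (csum (fun i => RtoC (w i) * x i (k i)) d)) <= sum_f_R0 (fun i => Rabs (w i)) d * nrm x.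
Proof.
  intros H. rewrite Im_csum. eapply Rle_trans. apply sum_f_R0_triangle.
  rewrite Rmult_comm, scal_sum. apply sum_Rle. intros i _. rewrite Im_Cmult_RtoC, Rabs_mult.
  apply Rmult_le_compat_l. apply Rabs_pos. apply abs_snd_nrm; auto.
Qed.

Open Scope R_scope.
Lemma small_zero (r K : R) : 0 <= K -> (forall eps, 0 < eps -> Rabs r <= K * eps) -> r = 0.
Proof.
  intros HK H. destruct (Req_dec r 0) as [|Hr]; auto. exfalso.
  assert (Ha : 0 < Rabs r) by (apply Rabs_pos_lt; auto).
  specialize (H (Rabs r / (2 * (K + 1))) ltac:(apply Rdiv_lt_0_compat; lra)).
  assert (K * (Rabs r / (2 * (K + 1))) < Rabs r).
  { unfold Rdiv. rewrite <- Rmult_assoc.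
    apply (Rmult_lt_reg_r (2 * (K+1))); [lra|].
    rewrite Rmult_assoc, Rinv_l by lra. nra. }
  lra.
Qed.

Open Scope C_scope.
Lemma C_zero (c : C) : fst c = 0%R -> snd c = 0%R -> c = RtoC 0.
Proof. intros. apply injective_projections; simpl; auto. Qed.

Lemma Ab_w f d : Ab f d = csum (fun i => RtoC 1 * f i (d - i)%nat) d.
Proof. unfold Ab. apply csum_ext; intros. ring. Qed.

Lemma closed_lin (f : seq2) (L : seq2 -> C) (K : R) :
  0 <= K -> inH2 f ->
  (forall g, Mc g -> L g = 0) -> (forall f g, L (s2sub f g) = L f - L g) ->
  (forall x, inH2 x -> Rabs (Re (L x)) <= K * nrm x /\ Rabs (Im (L x)) <= K * nrm x) ->
  (forall eps, 0 < eps -> exists g, Mc g /\ nrm (s2sub f g) < eps) -> L f = 0.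
Proof.
  intros HK Hf HL Hsub Hb Happ.
  assert (Hx : forall eps, 0 < eps -> Rabs (Re (L f)) <= K * eps /\ Rabs (Im (L f)) <= K * eps).
  { intros eps He. destruct (Happ eps He) as [g [Hg Hn]].
    assert (E : L f = L (s2sub f g)) by (rewrite Hsub, (HL g Hg); ring).
    rewrite E. destruct (Hb (s2sub f g)) as [H1 H2]. apply inH2_sub; auto. apply Hg.
    split; eapply Rle_trans; eauto; apply Rmult_le_compat_l; lra. }
  apply C_zero; eapply small_zero; eauto; intros; apply Hx; auto.
Qed.

Lemma inH2_zero : inH2 s2zero.
Proof. exists 0. intros N. rewrite sqsum_rsq. unfold rsq. rewrite <- (sum_zero N). right. apply sum_eq. intros.
  rewrite <- (sum_zero N). apply sum_eq. intros. unfold nsq, s2zero. simpl. ring. Qed.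

Lemma Mc_submodule : submodule Mc.
Proof.
  unfold submodule. split; [|split; [|split; [|split; [|split; [|split]]]]].
  - intros f [H _]; exact H.
  - split. apply inH2_zero. intros d. unfold Ab, Bb, s2zero. rewrite csum_zero. split; auto.
    rewrite (csum_ext _ (fun _ => RtoC 0)) by (intros; ring). apply csum_zero.
  - intros f g [Hf Af] [Hg Ag]. split. apply inH2_add; auto. intros d.
    rewrite Ab_add, Bb_add. destruct (Af d) as [-> ->]. destruct (Ag d) as [-> ->]. split; ring.
  - intros c f [Hf Af]. split. apply inH2_scal; auto. intros d.
    rewrite Ab_scal, Bb_scal. destruct (Af d) as [-> ->]. split; ring.
  - intros f Hf Happ. split; auto. intros d. split.
    + apply (closed_lin f (fun x => Ab x d) (sum_f_R0 (fun i => Rabs 1) d)); auto.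
      * apply cond_pos_sum. intros; apply Rabs_pos.
      * intros g [_ Hg]. apply Hg.
      * intros. apply Ab_sub.
      * intros x Hx. rewrite Ab_w. split; [apply wbound_Re|apply wbound_Im]; auto.
    + apply (closed_lin f (fun x => Bb x d) (sum_f_R0 (fun i => Rabs (INR i)) d)); auto.
      * apply cond_pos_sum. intros; apply Rabs_pos.
      * intros g [_ Hg]. apply Hg.
      * intros. apply Bb_sub.
      * intros x Hx. unfold Bb. split; [apply wbound_Re|apply wbound_Im]; auto.
  - intros f [Hf Af]. split. apply inH2_Sz; auto. intros [|e].
    rewrite Ab_Sz0, Bb_Sz0; auto. rewrite Ab_SzS, Bb_SzS. destruct (Af e) as [-> ->]. split; ring.
  - intros f [Hf Af]. split. apply inH2_Sw; auto. intros [|e].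
    rewrite Ab_Sw0, Bb_Sw0; auto. rewrite Ab_SwS, Bb_SwS. destruct (Af e) as [-> ->]. split; ring.
Qed.

Lemma finsupp_H2 (f : seq2) (K : nat) : (forall i j, (K < i)%nat \/ (K < j)%nat -> f i j = 0) -> inH2 f.
Proof.
  intros H. apply inH2_b. exists (rsq K (nsq2 f)). intros N.
  destruct (Nat.le_ge_cases N K).
  - apply rsq_mono; auto. apply nsq2_nonneg.
  - rewrite <- (rsq_mask _ K N) by lia. right. apply rsq_ext. intros i j. unfold sqmask, nsq2.
    destruct (Nat.leb_spec i K), (Nat.leb_spec j K); simpl; auto;
    rewrite H by lia; unfold nsq; simpl; ring.
Qed.

Lemma zmw2_zero i j : (i + j <> 2)%nat -> zmw2 i j = 0.
Proof. intros H. destruct i as [|[|[|i]]]; destruct j as [|[|[|j]]]; simpl in *; try reflexivity; lia. Qed.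

Lemma zmw2_Mc : Mc zmw2.
Proof.
  split.
  - apply (finsupp_H2 _ 2). intros i j Hij. apply zmw2_zero. lia.
  - intros d. destruct (Nat.eq_dec d 2) as [->|Hd].
    + unfold Ab, Bb. simpl. split; cpair.
    + unfold Ab, Bb. split.
      * rewrite (csum_ext _ (fun _ => RtoC 0)). apply csum_zero. intros. apply zmw2_zero. lia.
      * rewrite (csum_ext _ (fun _ => RtoC 0)). apply csum_zero. intros. rewrite zmw2_zero by lia. ring.
Qed.
Open Scope R_scope.
Definition gS1 (e : nat) : R := INR e * (INR e + 1) / 2.
Definition gS2 (e : nat) : R := INR e * (INR e + 1) * (2 * INR e + 1) / 6.
Definition gdet (e : nat) : R := INR e * (INR e + 1) ^ 2 * (INR e + 2) / 12.
Open Scope C_scope.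

Definition qal (e : nat) (a b : C) : C :=
  match e with O => a | S _ => RtoC (gS2 e / gdet e) * a - RtoC (gS1 e / gdet e) * b end.
Definition qbe (e : nat) (a b : C) : C :=
  match e with O => 0 | S _ => RtoC ((INR e + 1) / gdet e) * b - RtoC (gS1 e / gdet e) * a end.
Definition qv (e : nat) (a b : C) (i : nat) : C := qal e a b + RtoC (INR i) * qbe e a b.

Definition Qx (h : seq2) : seq2 := fun i j => qv (i + j) (Ab h (i + j)) (Bb h (i + j)) i.
Definition Px (h : seq2) : seq2 := s2sub h (Qx h).

Lemma gdet_pos e : (1 <= e)%nat -> (0 < gdet e)%R.
Proof. intros H. unfold gdet. apply le_INR in H. simpl in H. apply Rdiv_lt_0_compat; [|lra].
  apply Rmult_lt_0_compat; [|lra]. apply Rmult_lt_0_compat; [lra|]. apply pow_lt. lra. Qed.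

Lemma gram (e : nat) (a b : C) : (e = O -> b = RtoC 0) ->
  RtoC (INR e + 1) * qal e a b + RtoC (gS1 e) * qbe e a b = a /\
  RtoC (gS1 e) * qal e a b + RtoC (gS2 e) * qbe e a b = b.
Proof.
  intros Hb. destruct e as [|e].
  - rewrite (Hb eq_refl). unfold qal, qbe, gS1, gS2. simpl. split; cpair.
  - assert (Hd := gdet_pos (S e) ltac:(lia)).
    unfold qal, qbe. unfold gS1, gS2 in *. unfold gdet in *. 
    assert (Hx : (1 <= INR (S e))%R) by (apply (le_INR 1); lia).
    set (x := INR (S e)) in *. split; apply injective_projections; simpl; field; repeat split; try lra.
Qed.

Lemma Qx_blk h d i : (i <= d)%nat -> Qx h i (d - i)%nat = qv d (Ab h d) (Bb h d) i.
Proof. intros H. unfold Qx. replace (i + (d - i))%nat with d by lia. reflexivity. Qed.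

Lemma Bb0 f : Bb f 0 = 0.
Proof. unfold Bb. simpl. ring. Qed.

Lemma Ab_Qx h d : Ab (Qx h) d = Ab h d.
Proof.
  unfold Ab at 1. rewrite (csum_ext _ (fun i => qal d (Ab h d) (Bb h d) + RtoC (INR i) * qbe d (Ab h d) (Bb h d)))
    by (intros; apply Qx_blk; auto).
  rewrite csum_plus, csum_const, csum_lin1.
  destruct (gram d (Ab h d) (Bb h d)) as [H1 _]. { intros ->. apply Bb0. }
  rewrite <- H1 at 3. unfold gS1. reflexivity.
Qed.

Lemma Bb_Qx h d : Bb (Qx h) d = Bb h d.
Proof.
  unfold Bb at 1. rewrite (csum_ext _ (fun i => RtoC (INR i) * qal d (Ab h d) (Bb h d) +
     RtoC (INR i * INR i) * qbe d (Ab h d) (Bb h d)))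
    by (intros; rewrite Qx_blk by auto; unfold qv; rewrite RtoC_mult; ring).
  rewrite csum_plus, csum_lin1, csum_lin2.
  destruct (gram d (Ab h d) (Bb h d)) as [_ H2]. { intros ->. apply Bb0. }
  rewrite <- H2 at 3. unfold gS1, gS2. reflexivity.
Qed.

Lemma Ab_Px h d : Ab (Px h) d = 0.
Proof. unfold Px. rewrite Ab_sub, Ab_Qx. ring. Qed.
Lemma Bb_Px h d : Bb (Px h) d = 0.
Proof. unfold Px. rewrite Bb_sub, Bb_Qx. ring. Qed.

Lemma blk_ip h k d :
  csum (fun i => Qx h i (d - i)%nat * Cconj (k i (d - i)%nat)) d =
  qal d (Ab h d) (Bb h d) * Cconj (Ab k d) + qbe d (Ab h d) (Bb h d) * Cconj (Bb k d).
Proof.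
  rewrite (csum_ext _ (fun i => (qal d (Ab h d) (Bb h d) + RtoC (INR i) * qbe d (Ab h d) (Bb h d)) * Cconj (k i (d - i)%nat)))
    by (intros; rewrite Qx_blk; auto).
  rewrite (csum_conj_lin _ _ (fun i => k i (d - i)%nat)). reflexivity.
Qed.

Lemma ipR_Re a b i j : ipR a b i j = Re (a i j * Cconj (b i j)).
Proof. unfold ipR. destruct (a i j), (b i j). simpl. ring. Qed.
Lemma ipI_Im a b i j : ipI a b i j = Im (a i j * Cconj (b i j)).
Proof. unfold ipI. destruct (a i j), (b i j). simpl. ring. Qed.

Lemma rtri_ipR a b N : rtri N (ipR a b) =
  sum_f_R0 (fun d => Re (csum (fun i => a i (d - i)%nat * Cconj (b i (d - i)%nat)) d)) N.
Proof. unfold rtri. apply sum_eq. intros d _. rewrite Re_csum. apply sum_eq. intros. apply ipR_Re. Qed.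
Lemma rtri_ipI a b N : rtri N (ipI a b) =
  sum_f_R0 (fun d => Im (csum (fun i => a i (d - i)%nat * Cconj (b i (d - i)%nat)) d)) N.
Proof. unfold rtri. apply sum_eq. intros d _. rewrite Im_csum. apply sum_eq. intros. apply ipI_Im. Qed.

Lemma Qx_orth h k : Mc k -> forall N, rtri N (ipR (Qx h) k) = 0%R /\ rtri N (ipI (Qx h) k) = 0%R.
Proof.
  intros [_ Hk] N. rewrite rtri_ipR, rtri_ipI.
  split; rewrite <- (sum_zero N); apply sum_eq; intros d _; rewrite blk_ip;
   destruct (Hk d) as [-> ->]; rewrite Cconj_RtoC; simpl; ring.
Qed.

(* Pythagoras per block *)
Lemma blk_pyth h d :
  (sum_f_R0 (fun i => nsq (Px h i (d - i)%nat)) d <= sum_f_R0 (fun i => nsq (h i (d - i)%nat)) d)%R.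
Proof.
  assert (E : forall i, nsq (h i (d - i)%nat) =
     (nsq (Px h i (d - i)%nat) + nsq (Qx h i (d - i)%nat) +
      Re (Qx h i (d - i)%nat * Cconj (Px h i (d - i)%nat)) * 2)%R).
  { intros i. unfold Px, s2sub, s2add, s2opp, nsq. destruct (h i (d-i)%nat), (Qx h i (d-i)%nat). simpl. ring. }
  rewrite (sum_eq _ _ d (fun i _ => E i)).
  rewrite !plus_sum. rewrite <- scal_sum, <- Re_csum.
  rewrite (blk_ip h (Px h) d), Ab_Px, Bb_Px, Cconj_RtoC.
  assert (0 <= sum_f_R0 (fun i => nsq (Qx h i (d - i)%nat)) d)%R by (apply cond_pos_sum; intros; apply nsq_nonneg).
  simpl. lra.
Qed.

Lemma inH2_Px h : inH2 h -> inH2 (Px h).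
Proof.
  intros Hh. apply inH2_b in Hh. destruct Hh as [B HB]. apply inH2_b. exists B. intros N.
  eapply Rle_trans. apply rsq_le_rtri. apply nsq2_nonneg.
  eapply Rle_trans. 2:{ apply (Rle_trans _ (rsq (2*N) (nsq2 h))). apply rtri_le_rsq. apply nsq2_nonneg. apply HB. }
  unfold rtri, nsq2. apply sum_Rle. intros. apply blk_pyth.
Qed.

Lemma Mc_Px h : inH2 h -> Mc (Px h).
Proof. intros H. split. apply inH2_Px; auto. intros d. split. apply Ab_Px. apply Bb_Px. Qed.

Lemma inH2_Qx h : inH2 h -> inH2 (Qx h).
Proof.
  intros H. apply (inH2_ext (s2sub h (Px h))). intros i j. unfold Px, s2sub, s2add, s2opp. ring.
  apply inH2_sub; auto. apply inH2_Px; auto.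
Qed.
Definition Mset : seq2 -> Prop := gen_submodule zmw2.

Lemma Mset_Mc f : Mset f -> Mc f.
Proof. intros H. apply H. apply Mc_submodule. apply zmw2_Mc. Qed.

Section SM.
Variable M : seq2 -> Prop.
Hypothesis HM : submodule M.
Lemma sm_H2 f : M f -> inH2 f. Proof. destruct HM as [H _]. apply H. Qed.
Lemma sm_zero : M s2zero. Proof. destruct HM as [_ [H _]]. exact H. Qed.
Lemma sm_add f g : M f -> M g -> M (s2add f g). Proof. destruct HM as [_ [_ [H _]]]. apply H. Qed.
Lemma sm_scal c f : M f -> M (s2scal c f). Proof. destruct HM as [_ [_ [_ [H _]]]]. apply H. Qed.
Lemma sm_closed f : inH2 f -> (forall eps, 0 < eps -> exists g, M g /\ nrm (s2sub f g) < eps) -> M f.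
Proof. destruct HM as [_ [_ [_ [_ [H _]]]]]. apply H. Qed.
Lemma sm_Sz f : M f -> M (Sz f). Proof. destruct HM as [_ [_ [_ [_ [_ [H _]]]]]]. apply H. Qed.
Lemma sm_Sw f : M f -> M (Sw f). Proof. destruct HM as [_ [_ [_ [_ [_ [_ H]]]]]]. apply H. Qed.
End SM.

Lemma Mset_submodule : submodule Mset.
Proof.
  unfold submodule. split; [|split; [|split; [|split; [|split; [|split]]]]].
  - intros f H. apply Mset_Mc in H. apply H.
  - intros X HX _. apply sm_zero; auto.
  - intros f g Hf Hg X HX Hq. apply sm_add; auto; [apply Hf|apply Hg]; auto.
  - intros c f Hf X HX Hq. apply sm_scal; auto. apply Hf; auto.
  - intros f Hf Happ X HX Hq. apply sm_closed; auto. intros eps He. destruct (Happ eps He) as [g [Hg Hn]].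
    exists g. split; auto. apply Hg; auto.
  - intros f Hf X HX Hq. apply sm_Sz; auto. apply Hf; auto.
  - intros f Hf X HX Hq. apply sm_Sw; auto. apply Hf; auto.
Qed.

Lemma Mset_zmw2 : Mset zmw2.
Proof. intros M' _ H. exact H. Qed.

Fixpoint s2sum (F : nat -> seq2) (n : nat) : seq2 :=
  match n with O => F O | S m => s2add (s2sum F m) (F (S m)) end.

Lemma s2sum_eval F n i j : s2sum F n i j = csum (fun k => F k i j) n.
Proof. induction n; simpl. reflexivity. unfold s2add. rewrite IHn. reflexivity. Qed.

Lemma sub_s2sum (M : seq2 -> Prop) F n : submodule M -> (forall k, (k <= n)%nat -> M (F k)) -> M (s2sum F n).
Proof.
  intros HM H. induction n; simpl. apply H; lia.
  apply sm_add; [exact HM| apply IHn; intros; apply H; lia | apply H; lia].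
Qed.

Definition iterSz (a : nat) (g : seq2) : seq2 := Nat.iter a Sz g.
Definition iterSw (b : nat) (g : seq2) : seq2 := Nat.iter b Sw g.

Lemma sub_iterSz (M : seq2 -> Prop) a g : submodule M -> M g -> M (iterSz a g).
Proof. intros HM Hg. induction a; simpl; auto. apply sm_Sz; auto. Qed.
Lemma sub_iterSw (M : seq2 -> Prop) a g : submodule M -> M g -> M (iterSw a g).
Proof. intros HM Hg. induction a; simpl; auto. apply sm_Sw; auto. Qed.

Lemma iterSz_eval a g i j : iterSz a g i j = if Nat.leb a i then g (i - a)%nat j else 0.
Proof.
  revert i. induction a; intros i; simpl. rewrite Nat.sub_0_r. reflexivity.
  unfold Sz. destruct i as [|i]. reflexivity. fold (iterSz a g). rewrite IHa. reflexivity.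
Qed.
Lemma iterSw_eval b g i j : iterSw b g i j = if Nat.leb b j then g i (j - b)%nat else 0.
Proof.
  revert j. induction b; intros j; simpl. rewrite Nat.sub_0_r. reflexivity.
  unfold Sw. destruct j as [|j]. reflexivity. fold (iterSw b g). rewrite IHb. reflexivity.
Qed.

Definition delta00 : seq2 := fun i j => if andb (Nat.eqb i 0) (Nat.eqb j 0) then RtoC 1 else RtoC 0.
Definition dlt (a b : nat) : seq2 := iterSz a (iterSw b delta00).
Lemma dlt_eval a b i j : dlt a b i j = (if Nat.eqb i a then RtoC 1 else RtoC 0) * (if Nat.eqb j b then RtoC 1 else RtoC 0).
Proof.
  unfold dlt. rewrite iterSz_eval. destruct (Nat.leb_spec a i).
  - rewrite iterSw_eval. destruct (Nat.leb_spec b j).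
    + unfold delta00. destruct (Nat.eqb_spec (i - a) 0), (Nat.eqb_spec (j - b) 0), (Nat.eqb_spec i a), (Nat.eqb_spec j b);
      simpl; try lia; ring.
    + destruct (Nat.eqb_spec j b); try lia. ring.
  - destruct (Nat.eqb_spec i a); try lia. ring.
Qed.

Definition mulq (R : seq2) : seq2 :=
  s2add (s2sub (Sz (Sz R)) (s2scal (RtoC 2) (Sz (Sw R)))) (Sw (Sw R)).

Lemma seq2_ext (a b : seq2) : (forall i j, a i j = b i j) -> a = b.
Proof. intros H. apply functional_extensionality; intros i; apply functional_extensionality; intros j; auto. Qed.

Lemma mulq_Sz y : mulq (Sz y) = Sz (mulq y).
Proof. apply seq2_ext. intros i j. unfold mulq. unfold s2sub, s2scal. unfold s2add, s2opp, Sz, Sw.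
  destruct i as [|[|[|i]]]; destruct j as [|[|[|j]]]; ring. Qed.
Lemma mulq_Sw y : mulq (Sw y) = Sw (mulq y).
Proof. apply seq2_ext. intros i j. unfold mulq. unfold s2sub, s2scal. unfold s2add, s2opp, Sz, Sw.
  destruct i as [|[|[|i]]]; destruct j as [|[|[|j]]]; ring. Qed.
Lemma mulq_delta00 : mulq delta00 = zmw2.
Proof. apply seq2_ext. intros i j. unfold mulq, s2add, s2sub, s2opp, s2scal, Sz, Sw, delta00, zmw2.
  destruct i as [|[|[|i]]]; destruct j as [|[|[|j]]]; simpl; cpair. Qed.

Lemma mulq_dlt a b : mulq (dlt a b) = iterSz a (iterSw b zmw2).
Proof.
  unfold dlt. induction a; simpl.
  - induction b; simpl. apply mulq_delta00. rewrite mulq_Sw, IHb. reflexivity.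
  - rewrite mulq_Sz. fold (iterSz a (iterSw b delta00)). rewrite IHa. reflexivity.
Qed.

Lemma mulq_add x y : mulq (s2add x y) = s2add (mulq x) (mulq y).
Proof. apply seq2_ext. intros i j. unfold mulq. unfold s2sub, s2scal. unfold s2add, s2opp, Sz, Sw.
  destruct i as [|[|[|i]]]; destruct j as [|[|[|j]]]; ring. Qed.
Lemma mulq_scal c x : mulq (s2scal c x) = s2scal c (mulq x).
Proof. apply seq2_ext. intros i j. unfold mulq. unfold s2sub, s2scal. unfold s2add, s2opp, Sz, Sw.
  destruct i as [|[|[|i]]]; destruct j as [|[|[|j]]]; ring. Qed.
Lemma mulq_s2sum F n : mulq (s2sum F n) = s2sum (fun k => mulq (F k)) n.
Proof. induction n; simpl. reflexivity. rewrite mulq_add, IHn. reflexivity. Qed.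

Lemma csum_delta (c : nat -> C) i K :
  csum (fun k => c k * (if Nat.eqb i k then RtoC 1 else RtoC 0)) K = if Nat.leb i K then c i else 0.
Proof.
  induction K; simpl.
  - destruct i; simpl; ring.
  - rewrite IHK. destruct (Nat.eqb_spec i (S K)), (Nat.leb_spec i K), (Nat.leb_spec i (S K)); subst; try lia; ring.
Qed.

Lemma fin_decomp (R : seq2) K : (forall a b, (K < a)%nat \/ (K < b)%nat -> R a b = 0) ->
  R = s2sum (fun a => s2sum (fun b => s2scal (R a b) (dlt a b)) K) K.
Proof.
  intros H. apply seq2_ext. intros i j. rewrite s2sum_eval.
  rewrite (csum_ext _ (fun a => (if Nat.leb j K then R a j else 0) * (if Nat.eqb i a then RtoC 1 else RtoC 0))).
  - rewrite csum_delta. destruct (Nat.leb_spec j K), (Nat.leb_spec i K); auto; rewrite H; auto; lia.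
  - intros a _. rewrite s2sum_eval. unfold s2scal.
    rewrite (csum_ext _ (fun b => ((if Nat.eqb i a then RtoC 1 else RtoC 0) * R a b) * (if Nat.eqb j b then RtoC 1 else RtoC 0))).
    rewrite csum_delta. destruct (Nat.leb j K); ring.
    intros b _. rewrite dlt_eval. ring.
Qed.

Lemma mulq_fin (M : seq2 -> Prop) (R : seq2) K : submodule M -> M zmw2 ->
  (forall a b, (K < a)%nat \/ (K < b)%nat -> R a b = 0) -> M (mulq R).
Proof.
  intros HM Hq H. rewrite (fin_decomp R K H). rewrite mulq_s2sum. apply sub_s2sum; auto. intros a _.
  rewrite mulq_s2sum. apply sub_s2sum; auto. intros b _. rewrite mulq_scal. apply sm_scal; auto.
  rewrite mulq_dlt. apply sub_iterSz; auto. apply sub_iterSw; auto.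
Qed.
Lemma qq_weighted (p : nat -> C) n :
  csum (csum p) n = csum (fun l => RtoC (INR n + 1 - INR l) * p l) n.
Proof.
  induction n.
  - simpl. cpair.
  - rewrite csum_S, IHn. rewrite (csum_S (fun l => _ * p l)).
    rewrite (csum_ext (fun l => RtoC (INR (S n) + 1 - INR l) * p l)
                      (fun l => RtoC (INR n + 1 - INR l) * p l + p l)).
    + rewrite csum_plus. rewrite S_INR. cpair.
    + intros. rewrite S_INR. cpair.
Qed.

Lemma qzero (p : nat -> C) d : csum p d = 0 -> csum (fun l => RtoC (INR l) * p l) d = 0 ->
  csum (csum p) d = 0.
Proof.
  intros H1 H2. rewrite qq_weighted.
  rewrite (csum_ext _ (fun l => RtoC (INR d + 1) * p l - RtoC (INR l) * p l)) by (intros; cpair).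
  rewrite csum_minus, csum_scal, H1, H2. ring.
Qed.

Lemma qzero1 (p : nat -> C) e : csum p (S e) = 0 -> csum (fun l => RtoC (INR l) * p l) (S e) = 0 ->
  csum (csum p) e = 0.
Proof.
  intros H1 H2. pose proof (qzero p (S e) H1 H2) as H. rewrite csum_S, H1 in H.
  rewrite <- H. ring.
Qed.

Lemma qL3 (p : nat -> C) k : csum (csum p) (S (S k)) - RtoC 2 * csum (csum p) (S k) + csum (csum p) k = p (S (S k)).
Proof. rewrite !csum_S. ring. Qed.
Lemma qL2 (p : nat -> C) : csum (csum p) 1 - RtoC 2 * csum (csum p) 0 = p 1%nat.
Proof. simpl. ring. Qed.

Definition trunc (D : nat) (f : seq2) : seq2 := fun i j => if Nat.leb (i + j) D then f i j else 0.
Definition qq (f : seq2) (d k : nat) : C := csum (fun m => csum (fun l => f l (d - l)%nat) m) k.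
Definition RD (D : nat) (f : seq2) : seq2 :=
  fun a b => if Nat.leb (a + b + 2) D then qq f (a + b + 2) a else 0.

Lemma mulq_eval R i j : mulq R i j =
  (if Nat.leb 2 i then R (i - 2)%nat j else 0) - RtoC 2 * (if andb (Nat.leb 1 i) (Nat.leb 1 j) then R (i - 1)%nat (j - 1)%nat else 0)
  + (if Nat.leb 2 j then R i (j - 2)%nat else 0).
Proof.
  unfold mulq. unfold s2sub, s2scal. unfold s2add, s2opp, Sz, Sw.
  destruct i as [|[|i]]; destruct j as [|[|j]]; simpl; rewrite ?Nat.sub_0_r; ring.
Qed.

Lemma Mc_blk f d : Mc f -> csum (fun l => f l (d - l)%nat) d = 0 /\
  csum (fun l => RtoC (INR l) * f l (d - l)%nat) d = 0.
Proof. intros [_ H]. apply H. Qed.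

Lemma trunc_mulq D f : Mc f -> trunc D f = mulq (RD D f).
Proof.
  intros Hf. apply seq2_ext. intros i j. rewrite mulq_eval. unfold trunc, RD.
  set (d := (i + j)%nat).
  assert (E1 : (2 <= i)%nat -> (i - 2 + j + 2)%nat = d) by (unfold d; lia).
  assert (E2 : (1 <= i)%nat -> (1 <= j)%nat -> (i - 1 + (j - 1) + 2)%nat = d) by (unfold d; lia).
  assert (E3 : (2 <= j)%nat -> (i + (j - 2) + 2)%nat = d) by (unfold d; lia).
  set (p := fun l => f l (d - l)%nat).
  assert (Hp : f i j = p i) by (unfold p; f_equal; unfold d; lia).
  destruct (Mc_blk f d Hf) as [HA HB]. change (csum p d = 0) in HA. change (csum (fun l => RtoC (INR l) * p l) d = 0) in HB.
  assert (Hq : forall k, qq f d k = csum (csum p) k) by reflexivity.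
  destruct (Nat.leb_spec 2 i); destruct (Nat.leb_spec 1 i); destruct (Nat.leb_spec 1 j);
   destruct (Nat.leb_spec 2 j); simpl; try lia;
   rewrite ?E1, ?E2, ?E3 by lia; destruct (Nat.leb d D); rewrite ?Hq; try ring.
  all: rewrite Hp.
  - destruct i as [|[|k]]; try lia. replace (S (S k) - 2)%nat with k by lia.
    replace (S (S k) - 1)%nat with (S k) by lia. rewrite <- (qL3 p k). ring.
  - destruct i as [|[|k]]; try lia. assert (Hd : d = S (S (S k))) by (unfold d; lia).
    rewrite Hd in HA, HB. pose proof (qzero1 p (S (S k)) HA HB) as Z.
    replace (S (S k) - 2)%nat with k by lia. replace (S (S k) - 1)%nat with (S k) by lia.
    rewrite <- (qL3 p k), Z. ring.
  - destruct i as [|[|k]]; try lia. assert (Hd : d = S (S k)) by (unfold d; lia).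
    rewrite Hd in HA, HB. pose proof (qzero p (S (S k)) HA HB) as Z0. pose proof (qzero1 p (S k) HA HB) as Z1.
    replace (S (S k) - 2)%nat with k by lia.
    rewrite <- (qL3 p k), Z0, Z1. ring.
  - assert (i = 1%nat) by lia. subst i. simpl (1 - 1)%nat. rewrite <- qL2. ring.
  - assert (i = 1%nat) by lia. subst i. assert (Hd : d = 2%nat) by (unfold d; lia).
    rewrite Hd in HA, HB. pose proof (qzero1 p 1 HA HB) as Z. simpl (1 - 1)%nat.
    transitivity (csum (csum p) 1 - RtoC 2 * csum (csum p) 0). symmetry. apply qL2. rewrite Z. ring.
  - assert (i = 1%nat) by lia. subst i. assert (Hd : d = 1%nat) by (unfold d; lia).
    rewrite Hd in HA, HB. transitivity (csum (fun l => RtoC (INR l) * p l) 1).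
    simpl. ring. rewrite HB. ring.
  - assert (i = 0%nat) by lia. subst i. simpl. ring.
  - assert (i = 0%nat) by lia. subst i. assert (Hd : d = 1%nat) by (unfold d; lia).
    rewrite Hd in HA, HB. transitivity (csum p 1 - csum (fun l => RtoC (INR l) * p l) 1).
    simpl. ring. rewrite HA, HB. ring.
  - assert (i = 0%nat) by lia. subst i. assert (Hd : d = 0%nat) by (unfold d; lia).
    rewrite Hd in HA. simpl in HA. rewrite HA. ring.
Qed.
Lemma trunc_in (M : seq2 -> Prop) D f : submodule M -> M zmw2 -> Mc f -> M (trunc D f).
Proof.
  intros HM Hq Hf. rewrite (trunc_mulq D f Hf). apply (mulq_fin M _ D HM Hq).
  intros a b H. unfold RD. destruct (Nat.leb_spec (a + b + 2) D); auto; lia.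
Qed.

Open Scope R_scope.
Lemma sqrt_lt_eps y eps : 0 <= y -> 0 < eps -> y < eps ^ 2 -> sqrt y < eps.
Proof.
  intros Hy He H. rewrite <- (sqrt_pow2 eps) by lra. apply sqrt_lt_1_alt. lra.
Qed.

Lemma trunc_close f : inH2 f -> forall eps, 0 < eps -> exists D, nrm (s2sub f (trunc D f)) < eps.
Proof.
  intros Hf eps He.
  set (F := nsq2 f).
  assert (HF0 : forall i j, 0 <= F i j) by (intros; apply nsq2_nonneg).
  assert (HFb : bounded2 F) by (apply inH2_b; auto).
  destruct (mono_lim F HF0 HFb) as [L HL].
  assert (HLim : real (Lim_seq (fun n => rsq n F)) = L) by (rewrite (is_lim_seq_unique _ _ HL); reflexivity).
  apply is_lim_seq_Reals in HL. destruct (HL (eps ^ 2) ltac:(apply pow_lt; lra)) as [N0 HN0].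
  exists (2 * N0)%nat.
  set (x := s2sub f (trunc (2 * N0) f)).
  assert (Xe : forall i j, nsq2 x i j = if Nat.leb (i + j) (2 * N0) then 0 else F i j).
  { intros i j. unfold x, F, nsq2, s2sub, s2add, s2opp, trunc.
    destruct (Nat.leb (i + j) (2 * N0)); unfold nsq; simpl; ring. }
  assert (Hx : bounded2 (nsq2 x)).
  { apply (bounded2_le _ F); auto. intros i j. rewrite Xe. destruct (Nat.leb (i+j) (2*N0)); [apply HF0|lra]. }
  assert (Hx0 : forall i j, 0 <= nsq2 x i j) by (intros; apply nsq2_nonneg).
  assert (Hb : forall n, rsq n (nsq2 x) <= L - rsq N0 F).
  { intros n. set (K := Nat.max n N0).
    apply (Rle_trans _ (rsq K (nsq2 x))). apply rsq_mono; auto; lia.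
    apply (Rle_trans _ (rsq K (fun i j => F i j - sqmask N0 F i j))).
    - apply rsq_le. intros i j. rewrite Xe. unfold sqmask.
      destruct (Nat.leb_spec (i + j) (2 * N0)), (Nat.leb_spec i N0), (Nat.leb_spec j N0); simpl;
        try lia; try lra; pose proof (HF0 i j); lra.
    - rewrite rsq_minus, rsq_mask by lia. rewrite <- HLim.
      pose proof (mono_le_lim F K HF0 HFb). lra. }
  unfold nrm. apply sqrt_lt_eps; auto.
  - eapply Rle_trans. apply nsq_nonneg. apply (coef_le_ip x 0 0). apply inH2_b; auto.
  - rewrite Re_ip, ipR_self. eapply Rle_lt_trans. apply lim_le_bound. apply mono_lim; auto. apply Hb.
    specialize (HN0 N0 ltac:(lia)). unfold R_dist in HN0. rewrite Rabs_minus_sym in HN0.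
    pose proof (Rle_abs (L - rsq N0 F)). lra.
Qed.

Open Scope C_scope.
Lemma Mc_Mset f : Mc f -> Mset f.
Proof.
  intros Hf M' HM' Hq. apply (sm_closed M' HM'). apply Hf.
  intros eps He. destruct (trunc_close f (proj1 Hf) eps He) as [D HD].
  exists (trunc D f). split; auto. apply trunc_in; auto.
Qed.

Lemma Mchar f : Mset f <-> Mc f.
Proof. split. apply Mset_Mc. apply Mc_Mset. Qed.

Lemma Mc_sub f g : Mc f -> Mc g -> Mc (s2sub f g).
Proof.
  intros [Hf Af] [Hg Ag]. split. apply inH2_sub; auto. intros d.
  rewrite Ab_sub, Bb_sub. destruct (Af d) as [-> ->]. destruct (Ag d) as [-> ->]. split; ring.
Qed.

Lemma Qx_eq h : s2sub h (Px h) = Qx h.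
Proof. apply seq2_ext. intros i j. unfold Px, s2sub, s2add, s2opp. ring. Qed.

Lemma is_proj_Px h : inH2 h -> is_proj Mset h (Px h).
Proof.
  intros Hh. split. apply Mc_Mset, Mc_Px; auto.
  intros k Hk. rewrite Qx_eq. apply Mset_Mc in Hk.
  apply ip_zero_tri. apply inH2_Qx; auto. apply Hk.
  intros N; apply (Qx_orth h k Hk N). intros N; apply (Qx_orth h k Hk N).
Qed.

Lemma proj_eq h : inH2 h -> proj Mset h = Px h.
Proof.
  intros Hh. unfold proj.
  assert (Hg := epsilon_spec (inhabits s2zero) (is_proj Mset h) (ex_intro _ (Px h) (is_proj_Px h Hh))).
  set (g := epsilon (inhabits s2zero) (is_proj Mset h)) in *.
  destruct Hg as [HgM Hgo].
  set (k := s2sub g (Px h)).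
  assert (Hk : Mc k) by (apply Mc_sub; [apply Mset_Mc; auto | apply Mc_Px; auto]).
  assert (HkH : inH2 k) by apply Hk.
  assert (Hk1 : ip (s2sub h g) k = RtoC 0) by (apply Hgo, Mc_Mset; auto).
  assert (Hk2 : ip (Qx h) k = RtoC 0).
  { apply ip_zero_tri. apply inH2_Qx; auto. auto.
    intros N; apply (Qx_orth h k Hk N). intros N; apply (Qx_orth h k Hk N). }
  assert (HgH : inH2 g) by (apply Mset_Mc in HgM; apply HgM).
  assert (Hkk : Re (ip k k) = 0%R).
  { rewrite Re_ip. rewrite (lim_minus (fun n => rsq n (ipR (Qx h) k)) (fun n => rsq n (ipR (s2sub h g) k))).
    - rewrite <- !Re_ip, Hk1, Hk2. simpl. ring.
    - apply ipR_ex; auto. apply inH2_Qx; auto.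
    - apply ipR_ex; auto. apply inH2_sub; auto.
    - intros n. rewrite <- rsq_minus. apply rsq_ext. intros i j. unfold ipR, k.
      unfold Px, s2sub, s2add, s2opp.
      destruct (h i j), (g i j), (Qx h i j). simpl. ring. }
  apply ip_self_zero in Hkk; auto.
  apply seq2_ext. intros i j. assert (E : k i j = s2zero i j) by (rewrite Hkk; reflexivity).
  unfold k, s2sub, s2add, s2opp, s2zero in E. 
  transitivity (g i j + - Px h i j + Px h i j). ring. rewrite E. ring.
Qed.
Lemma Ab_Szadj g e : Ab (Szadj g) e = Ab g (S e) - g 0%nat (S e).
Proof. unfold Ab. rewrite (csum_first (fun i => g i (S e - i)%nat)). unfold Szadj. simpl. ring. Qed.
Lemma Bb_Szadj g e : Bb (Szadj g) e = Bb g (S e) - Ab g (S e) + g 0%nat (S e).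
Proof.
  unfold Bb, Ab. rewrite (csum_first (fun i => RtoC (INR i) * g i (S e - i)%nat)).
  rewrite (csum_first (fun i => g i (S e - i)%nat)).
  transitivity (RtoC (INR 0) * g 0%nat (S e - 0)%nat + csum (fun i => RtoC (INR (S i)) * g (S i) (S e - S i)%nat) e -
   (g 0%nat (S e - 0)%nat + csum (fun i => g (S i) (S e - S i)%nat) e) + g 0%nat (S e)).
  2: reflexivity.
  rewrite Nat.sub_0_r. simpl (INR 0).
  assert (E : csum (fun i => RtoC (INR (S i)) * g (S i) (S e - S i)%nat) e =
     csum (fun i => RtoC (INR i) * Szadj g i (e - i)%nat) e + csum (fun i => g (S i) (S e - S i)%nat) e).
  { rewrite <- csum_plus. apply csum_ext. intros i _. unfold Szadj. simpl (S e - S i)%nat. rewrite S_INR. cpair. }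
  rewrite E. ring.
Qed.
Lemma Ab_Swadj g e : Ab (Swadj g) e = Ab g (S e) - g (S e) 0%nat.
Proof.
  unfold Ab. rewrite csum_S. replace (S e - S e)%nat with 0%nat by lia.
  transitivity (csum (fun i => g i (S e - i)%nat) e). 2: ring.
  apply csum_ext. intros i Hi. unfold Swadj. f_equal. lia.
Qed.
Lemma Bb_Swadj g e : Bb (Swadj g) e = Bb g (S e) - RtoC (INR (S e)) * g (S e) 0%nat.
Proof.
  unfold Bb. rewrite csum_S. replace (S e - S e)%nat with 0%nat by lia.
  transitivity (csum (fun i => RtoC (INR i) * g i (S e - i)%nat) e). 2: ring.
  apply csum_ext. intros i Hi. unfold Swadj. f_equal. f_equal. lia.
Qed.

Definition Cop (g : seq2) : seq2 := core_on_M Mset g.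

Definition tval (g : seq2) (e : nat) : C :=
  g 0%nat (S (S e)) - qv (S e) (- g (S (S e)) 0%nat) (- (RtoC (INR (S (S e))) * g (S (S e)) 0%nat)) 0.

Definition Cform (g : seq2) (i j : nat) : C :=
  match i, j with
  | O, O => 0
  | S i', O => qv i' (- g 0%nat (S i')) (g 0%nat (S i')) i'
  | O, S j' => qv j' (- g (S j') 0%nat) (- (RtoC (INR (S j')) * g (S j') 0%nat)) 0
  | S i', S j' => qv (i' + S j') (- g 0%nat (S (i' + S j'))) (g 0%nat (S (i' + S j'))) i'
                  - qv (i' + j') (- tval g (i' + j')) (tval g (i' + j')) i'
  end.

Lemma Qx_eval y i j : Qx y i j = qv (i + j) (Ab y (i + j)) (Bb y (i + j)) i.
Proof. reflexivity. Qed.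

Lemma Px_eval y i j : Px y i j = y i j - Qx y i j.
Proof. reflexivity. Qed.

Definition k1 (e i : nat) : R := match e with O => 1%R | S _ => (gS2 e / gdet e - INR i * (gS1 e / gdet e))%R end.
Definition k2 (e i : nat) : R := match e with O => 0%R | S _ => (- (gS1 e / gdet e) + INR i * ((INR e + 1) / gdet e))%R end.
Lemma qv_expand e a b i : qv e a b i = RtoC (k1 e i) * a + RtoC (k2 e i) * b.
Proof. destruct a, b. unfold qv, qal, qbe, k1, k2. destruct e; apply injective_projections; simpl; ring. Qed.

Lemma core_formula g : Mc g -> forall i j, Cop g i j = Cform g i j.
Proof.
  intros Hg i j. destruct Hg as [HgH HgA].
  assert (H1 : inH2 (Szadj g)) by (apply inH2_Szadj; auto).
  assert (H2 : inH2 (Swadj g)) by (apply inH2_Swadj; auto).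
  assert (H3 : inH2 (Szadj (Px (Swadj g)))) by (apply inH2_Szadj, inH2_Px; auto).
  unfold Cop, core_on_M. rewrite (proj_eq (Szadj g)), (proj_eq (Swadj g)), (proj_eq (Szadj (Px (Swadj g)))) by auto.
  cbv [s2add s2sub s2opp Sz Sw].
  destruct i as [|i']; destruct j as [|j']; unfold Cform.
  - destruct (HgA 0%nat) as [HA _]. unfold Ab in HA. simpl in HA. rewrite HA. ring.
  - rewrite Px_eval, Qx_eval. rewrite Nat.add_0_l. rewrite Ab_Swadj, Bb_Swadj.
    destruct (HgA (S j')) as [-> ->]. unfold Swadj. rewrite !qv_expand. ring.
  - rewrite Px_eval, Qx_eval. rewrite Nat.add_0_r. rewrite Ab_Szadj, Bb_Szadj.
    destruct (HgA (S i')) as [-> ->]. unfold Szadj. rewrite !qv_expand. ring.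
  - rewrite (Px_eval (Szadj g)), (Px_eval (Szadj (Px (Swadj g)))).
    rewrite !Qx_eval. rewrite !Ab_Szadj, !Bb_Szadj. rewrite Ab_Px, Bb_Px.
    destruct (HgA (S (i' + S j'))) as [-> ->].
    rewrite (Px_eval (Swadj g) 0%nat). rewrite Qx_eval. rewrite Nat.add_0_l.
    rewrite Ab_Swadj, Bb_Swadj. destruct (HgA (S (S (i' + j')))) as [-> ->].
    unfold tval. unfold Szadj, Swadj. rewrite !qv_expand. ring.
Qed.
Lemma Cform_end0 g m : Cform g 0 (S (S m)) = RtoC (2 / INR (S (S m))) * g (S (S m)) 0%nat.
Proof.
  unfold Cform. rewrite qv_expand. unfold k1, k2, gS1, gS2, gdet.
  assert (Hx : (1 <= INR (S m))%R) by (apply (le_INR 1); lia).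
  rewrite (S_INR (S m)). set (x := INR (S m)) in *. destruct (g (S (S m)) 0%nat).
  apply injective_projections; simpl; field; repeat split; lra.
Qed.
Lemma Cform_endd g m : Cform g (S (S m)) 0 = RtoC (2 / INR (S (S m))) * g 0%nat (S (S m)).
Proof.
  unfold Cform. rewrite qv_expand. unfold k1, k2, gS1, gS2, gdet.
  assert (Hx : (1 <= INR (S m))%R) by (apply (le_INR 1); lia).
  rewrite (S_INR (S m)). set (x := INR (S m)) in *. destruct (g 0%nat (S (S m))).
  apply injective_projections; simpl; field; repeat split; lra.
Qed.

Lemma Cform_zero (g : seq2) i j : g 0%nat (i + j)%nat = 0 -> g (i + j)%nat 0%nat = 0 -> Cform g i j = 0.
Proof.
  intros H0 H1. destruct i as [|i']; destruct j as [|j']; unfold Cform; try reflexivity.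
  - simpl in H1. rewrite H1. rewrite qv_expand. ring.
  - rewrite Nat.add_0_r in H0. rewrite H0. rewrite qv_expand. ring.
  - unfold tval. replace (S (i' + S j')) with (S i' + S j')%nat by lia.
    replace (S (S (i' + j'))) with (S i' + S j')%nat by lia. rewrite H0, H1.
    rewrite !qv_expand. ring.
Qed.

Lemma Cform_lin c a b i j : Cform (s2add (s2scal c a) b) i j = c * Cform a i j + Cform b i j.
Proof.
  destruct i as [|i']; destruct j as [|j']; unfold Cform; unfold tval; unfold s2add, s2scal;
    rewrite ?qv_expand; ring.
Qed.

Lemma Qx_Mc f : Mc f -> Qx f = s2zero.
Proof.
  intros [_ H]. apply seq2_ext. intros i j. rewrite Qx_eval. destruct (H (i + j)%nat) as [-> ->].
  rewrite qv_expand. unfold s2zero. ring.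
Qed.

Lemma Px_Mc f : Mc f -> Px f = f.
Proof. intros H. apply seq2_ext. intros i j. rewrite Px_eval, (Qx_Mc f H). unfold s2zero. ring. Qed.

Lemma proj_Mc f : Mc f -> proj Mset f = f.
Proof. intros H. rewrite proj_eq by apply H. apply Px_Mc; auto. Qed.

Lemma Px_scal c f : Px (s2scal c f) = s2scal c (Px f).
Proof.
  apply seq2_ext. intros i j. change (s2scal c (Px f) i j) with (c * Px f i j).
  rewrite !Px_eval, !Qx_eval, Ab_scal, Bb_scal. change (s2scal c f i j) with (c * f i j).
  rewrite !qv_expand. ring.
Qed.

Lemma sm_sub M f g : submodule M -> M f -> M g -> M (s2sub f g).
Proof.
  intros HM Hf Hg. replace (s2sub f g) with (s2add f (s2scal (RtoC (-1)) g)).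
  apply sm_add; auto. apply sm_scal; auto.
  apply seq2_ext. intros i j. unfold s2add, s2sub, s2opp, s2scal. cpair.
Qed.

Lemma proj_Mset h : inH2 h -> Mset (proj Mset h).
Proof. intros H. rewrite proj_eq by auto. apply Mc_Mset, Mc_Px; auto. Qed.

Lemma Cop_Mset g : Mset g -> Mset (Cop g).
Proof.
  intros Hg. assert (HgH : inH2 g) by (apply Mset_Mc in Hg; apply Hg).
  pose proof Mset_submodule as HM.
  unfold Cop, core_on_M. apply sm_add; auto. apply sm_sub; auto. apply sm_sub; auto.
  - apply sm_Sz; auto. apply proj_Mset. apply inH2_Szadj; auto.
  - apply sm_Sw; auto. apply proj_Mset. apply inH2_Swadj; auto.
  - apply sm_Sz; auto. apply sm_Sw; auto. apply proj_Mset. apply inH2_Szadj.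
    apply (sm_H2 Mset HM). apply proj_Mset. apply inH2_Swadj; auto.
Qed.
Lemma Ccancel (lam c z : C) : lam * z = c * z -> z <> 0 -> lam = c.
Proof.
  intros H Hz. transitivity (lam * z / z). field; auto. rewrite H. field; auto.
Qed.

Lemma Cmult_zero_r (lam z : C) : lam * z = 0 -> lam <> 0 -> z = 0.
Proof.
  intros H Hl. transitivity (/ lam * (lam * z)). field; auto. rewrite H. ring.
Qed.

Lemma RtoC_nz (r : R) : r <> 0%R -> RtoC r <> 0.
Proof. intros H E. apply H. apply (f_equal fst) in E. simpl in E. exact E. Qed.

Lemma INR_SS n : INR (S (S n)) = (INR n + 2)%R.
Proof. rewrite !S_INR. ring. Qed.

Lemma forward lam : eigenvalue (core_op Mset) lam ->
  lam = RtoC 0 \/ lam = RtoC 1 \/ exists n : nat, (1 <= n)%nat /\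
        (lam = RtoC (2 / (INR n + 2)) \/ lam = RtoC (- (2 / (INR n + 2)))).
Proof.
  intros [f [Hf [Hne Heq]]].
  destruct (Classical_Prop.classic (lam = RtoC 0)) as [->|Hl]; [left; reflexivity|right].
  unfold core_op in Heq. rewrite proj_eq in Heq by auto.
  set (g := Px f) in *.
  assert (Hg : Mc g) by (apply Mc_Px; auto).
  change (Cop g = s2scal lam f) in Heq.
  assert (HC : Cop g = s2scal lam g).
  { assert (E1 : Px (Cop g) = Cop g) by (apply Px_Mc, Mset_Mc, Cop_Mset, Mc_Mset; auto).
    rewrite <- E1, Heq, Px_scal. reflexivity. }
  assert (Hpt : forall i j, Cform g i j = lam * g i j).
  { intros i j. rewrite <- (core_formula g Hg). rewrite HC. reflexivity. }
  destruct (Classical_Prop.classic (exists i j, g i j <> 0)) as [[i [j Hij]]|Hno].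
  2:{ exfalso. apply Hne. apply seq2_ext. intros i j.
      assert (Z : forall i j, g i j = 0).
      { intros a b. apply Classical_Prop.NNPP. intros H. apply Hno. exists a, b. auto. }
      assert (E : s2scal lam f i j = Cop g i j) by (rewrite Heq; reflexivity).
      rewrite core_formula in E by auto. rewrite Hpt, Z in E. unfold s2scal in E.
      apply (Cmult_zero_r lam); auto. rewrite E. ring. }
  set (d := (i + j)%nat) in *.
  assert (Hend : g 0%nat d <> 0 \/ g d 0%nat <> 0).
  { apply Classical_Prop.NNPP. intros H. apply Hij.
    apply (Cmult_zero_r lam); auto. rewrite <- Hpt. apply (Cform_zero g i j).
    apply Classical_Prop.NNPP. intros H'. apply H. left. exact H'.
    apply Classical_Prop.NNPP. intros H'. apply H. right. exact H'. }
  destruct Hg as [HgH HgA].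
  destruct d as [|[|m]] eqn:Ed.
  - exfalso. destruct (HgA 0%nat) as [HA _]. unfold Ab in HA. simpl in HA. destruct Hend; auto.
  - exfalso. destruct (HgA 1%nat) as [HA HB]. unfold Ab, Bb in HA, HB. simpl in HA, HB.
    assert (E1 : g 1%nat 0%nat = 0). { transitivity (RtoC (INR 0) * g 0%nat 1%nat + RtoC (INR 1) * g 1%nat 0%nat). simpl. ring. exact HB. }
    assert (E0 : g 0%nat 1%nat = 0). { transitivity (g 0%nat 1%nat + g 1%nat 0%nat). rewrite E1. ring. exact HA. }
    destruct Hend; auto.
  - assert (Q0 := Hpt 0%nat (S (S m))). rewrite Cform_end0 in Q0.
    assert (Q1 := Hpt (S (S m)) 0%nat). rewrite Cform_endd in Q1.
    set (x := g 0%nat (S (S m))) in *. set (y := g (S (S m)) 0%nat) in *.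
    set (c := RtoC (2 / INR (S (S m)))) in *.
    destruct m as [|n].
    + left. destruct (HgA 2%nat) as [HA HB].
      assert (Exy : x - y = Ab g 2 - Bb g 2).
      { unfold Ab, Bb, x, y. simpl. destruct (g 0%nat 2%nat), (g 1%nat 1%nat), (g 2%nat 0%nat).
        apply injective_projections; simpl; ring. }
      rewrite HA, HB in Exy.
      assert (Hx : x <> 0).
      { intros H0. destruct Hend as [H1|H1]; apply H1; [exact H0|].
        transitivity (x - (x - y)). ring. rewrite Exy, H0. ring. }
      assert (Hc : c = RtoC 1) by (unfold c; f_equal; simpl; field).
      rewrite <- Hc. apply (Ccancel lam c x); auto. rewrite <- Q0.
      replace y with x. reflexivity. transitivity (x - (x - y)). 2: ring. rewrite Exy. ring.
    + right. exists (S n). split. lia.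
      assert (Hc : c = RtoC (2 / (INR (S n) + 2))) by (unfold c; rewrite INR_SS; reflexivity).
      rewrite <- Hc. rewrite RtoC_opp. rewrite <- Hc.
      destruct (Classical_Prop.classic (x + y = 0)) as [Hs|Hs].
      * right. assert (Hd : x - y <> 0).
        { intros H0. destruct Hend as [H1|H1]; apply H1.
          transitivity ((x + y + (x - y)) / 2). field. rewrite Hs, H0. field.
          transitivity ((x + y - (x - y)) / 2). field. rewrite Hs, H0. field. }
        apply (Ccancel lam (- c) (x - y)); auto.
        transitivity (lam * x - lam * y). ring. rewrite <- Q0, <- Q1. ring.
      * left. apply (Ccancel lam c (x + y)); auto.
        transitivity (lam * x + lam * y). ring. rewrite <- Q0, <- Q1. ring.
Qed.
Lemma backward m (g0 : seq2) (lam : C) : Mset g0 ->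
  (forall i j, (i + j <> S (S m))%nat -> g0 i j = 0) ->
  lam * g0 0%nat (S (S m)) = RtoC (2 / INR (S (S m))) * g0 (S (S m)) 0%nat ->
  lam * g0 (S (S m)) 0%nat = RtoC (2 / INR (S (S m))) * g0 0%nat (S (S m)) ->
  (g0 0%nat (S (S m)) <> 0 \/ g0 (S (S m)) 0%nat <> 0) ->
  eigenvalue (core_op Mset) lam.
Proof.
  intros HM Hsupp E0 E1 Hnz.
  set (c := RtoC (2 / INR (S (S m)))) in *.
  assert (Hc : c <> 0) by (apply RtoC_nz; apply Rgt_not_eq; apply Rdiv_lt_0_compat; [lra| apply lt_0_INR; lia]).
  assert (Hg0 : Mc g0) by (apply Mset_Mc; auto).
  set (f := Cop g0).
  assert (HfM : Mset f) by (apply Cop_Mset; auto).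
  assert (Hf : Mc f) by (apply Mset_Mc; auto).
  assert (Hfv : forall i j, f i j = Cform g0 i j) by (intros; apply core_formula; auto).
  exists f. split; [apply Hf|split].
  - intros Hz. destruct Hnz as [H|H]; apply H.
    + apply (Cmult_zero_r c); auto. unfold c. rewrite <- Cform_endd, <- Hfv, Hz. reflexivity.
    + apply (Cmult_zero_r c); auto. unfold c. rewrite <- Cform_end0, <- Hfv, Hz. reflexivity.
  - unfold core_op. rewrite proj_Mc by auto. change (Cop f = s2scal lam f).
    apply seq2_ext. intros i j. rewrite core_formula by auto.
    set (r := s2add (s2scal (- lam) g0) f).
    assert (Ef : f = s2add (s2scal lam g0) r).
    { apply seq2_ext. intros a b. unfold r, s2add, s2scal. ring. }
    transitivity (Cform (s2add (s2scal lam g0) r) i j). rewrite <- Ef. reflexivity.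
    rewrite Cform_lin. rewrite <- Hfv.
    rewrite (Cform_zero r i j). unfold s2scal. ring.
    + unfold r, s2add, s2scal. rewrite Hfv. destruct (Nat.eq_dec (i + j) (S (S m))) as [He|He].
      * rewrite He, Cform_end0. fold c. rewrite <- E0. ring.
      * rewrite Hsupp by auto. rewrite (Cform_zero g0 0 (i+j)). ring.
        rewrite Hsupp; auto. rewrite Hsupp; auto. simpl. lia.
    + unfold r, s2add, s2scal. rewrite Hfv. destruct (Nat.eq_dec (i + j) (S (S m))) as [He|He].
      * rewrite He, Cform_endd. fold c. rewrite <- E1. ring.
      * rewrite Hsupp by lia. rewrite (Cform_zero g0 (i+j) 0). ring.
        rewrite Hsupp; auto. rewrite Nat.add_0_r; auto. rewrite Hsupp; auto. lia.
Qed.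

Lemma eig_one : eigenvalue (core_op Mset) (RtoC 1).
Proof.
  apply (backward 0 zmw2). apply Mset_zmw2. intros i j H. apply zmw2_zero. auto.
  simpl. cpair. simpl. cpair. left. simpl. apply RtoC_nz. lra.
Qed.

Lemma eig_pm n (s : C) : (1 <= n)%nat -> s * s = 1 ->
  eigenvalue (core_op Mset) (s * RtoC (2 / (INR n + 2))).
Proof.
  intros Hn Hs.
  set (g0 := s2add (iterSw n zmw2) (s2scal s (iterSz n zmw2))).
  assert (Gv : forall i j, g0 i j = (if Nat.leb n j then zmw2 i (j - n)%nat else 0) +
                                   s * (if Nat.leb n i then zmw2 (i - n)%nat j else 0)).
  { intros. unfold g0, s2add, s2scal. rewrite iterSw_eval, iterSz_eval. reflexivity. }
  assert (A0 : g0 0%nat (S (S n)) = 1).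
  { rewrite Gv. destruct (Nat.leb_spec n (S (S n))); try lia. destruct (Nat.leb_spec n 0); try lia.
    replace (S (S n) - n)%nat with 2%nat by lia. simpl. ring. }
  assert (A1 : g0 (S (S n)) 0%nat = s).
  { rewrite Gv. destruct (Nat.leb_spec n 0); try lia. destruct (Nat.leb_spec n (S (S n))); try lia.
    replace (S (S n) - n)%nat with 2%nat by lia. simpl. ring. }
  replace (RtoC (2 / (INR n + 2))) with (RtoC (2 / INR (S (S n)))) by (rewrite INR_SS; reflexivity).
  apply (backward n g0).
  - unfold g0. pose proof Mset_submodule as HM. apply sm_add; auto.
    apply sub_iterSw; auto. apply Mset_zmw2. apply sm_scal; auto. apply sub_iterSz; auto. apply Mset_zmw2.
  - intros i j H. rewrite Gv. destruct (Nat.leb_spec n j), (Nat.leb_spec n i);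
      rewrite ?zmw2_zero by lia; ring.
  - rewrite A0, A1. ring.
  - rewrite A0, A1. transitivity (RtoC (2 / INR (S (S n))) * (s * s)). ring. rewrite Hs. ring.
  - left. rewrite A0. apply RtoC_nz. lra.
Qed.

Lemma eig_zero : eigenvalue (core_op Mset) (RtoC 0).
Proof.
  exists delta00. split; [|split].
  - apply (finsupp_H2 _ 0). intros i j H. unfold delta00.
    destruct (Nat.eqb_spec i 0), (Nat.eqb_spec j 0); simpl; auto; lia.
  - intros H. apply (f_equal (fun f => f 0%nat 0%nat)) in H. unfold delta00, s2zero in H. simpl in H.
    apply (f_equal fst) in H. simpl in H. lra.
  - unfold core_op. assert (Hd : inH2 delta00).
    { apply (finsupp_H2 _ 0). intros i j H. unfold delta00.
      destruct (Nat.eqb_spec i 0), (Nat.eqb_spec j 0); simpl; auto; lia. }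
    assert (E : proj Mset delta00 = s2zero).
    { rewrite proj_eq by auto. apply seq2_ext. intros i j. rewrite Px_eval, Qx_eval.
      destruct (Nat.eq_dec (i + j) 0) as [H0|H0].
      - assert (i = 0%nat) by lia. assert (j = 0%nat) by lia. subst. simpl. unfold Ab, Bb, delta00. simpl.
        unfold s2zero. cpair.
      - assert (HA : Ab delta00 (i + j) = 0).
        { unfold Ab. rewrite (csum_ext _ (fun _ => RtoC 0)). apply csum_zero.
          intros k Hk. unfold delta00. destruct (Nat.eqb_spec k 0), (Nat.eqb_spec (i + j - k) 0); simpl; auto; lia. }
        assert (HB : Bb delta00 (i + j) = 0).
        { unfold Bb. rewrite (csum_ext _ (fun _ => RtoC 0)). apply csum_zero.
          intros k Hk. unfold delta00. destruct (Nat.eqb_spec k 0), (Nat.eqb_spec (i + j - k) 0); simpl; try lia; ring. }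
        rewrite HA, HB, qv_expand. unfold delta00, s2zero.
        destruct (Nat.eqb_spec i 0), (Nat.eqb_spec j 0); simpl; try lia; ring. }
    rewrite E. change (Cop s2zero = s2scal 0 delta00).
    apply seq2_ext. intros i j. rewrite core_formula.
    rewrite Cform_zero. unfold s2scal. ring. reflexivity. reflexivity.
    split. apply inH2_zero. intros d. unfold Ab, Bb, s2zero. rewrite csum_zero. split; auto.
    rewrite (csum_ext _ (fun _ => RtoC 0)) by (intros; ring). apply csum_zero.
Qed.

Close Scope C_scope.
Open Scope R_scope.

Theorem theorem3p6 :
  (forall lam : C,
     eigenvalue (core_op (gen_submodule zmw2)) lam <->
     (lam = RtoC 0 \/ lam = RtoC 1 \/
      exists n : nat, (1 <= n)%nat /\
        (lam = RtoC (2 / (INR n + 2)) \/ lam = RtoC (- (2 / (INR n + 2))))))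
  /\
  (eigenvalue (core_op (gen_submodule zmw2)) (RtoC (2/3)) /\
   forall lam : C, eigenvalue (core_op (gen_submodule zmw2)) lam ->
     lam <> RtoC 1 -> Im lam = 0 /\ Re lam <= 2/3).
Proof.
  change (gen_submodule zmw2) with Mset.
  assert (Hiff : forall lam : C,
     eigenvalue (core_op Mset) lam <->
     (lam = RtoC 0 \/ lam = RtoC 1 \/
      exists n : nat, (1 <= n)%nat /\
        (lam = RtoC (2 / (INR n + 2)) \/ lam = RtoC (- (2 / (INR n + 2)))))).
  { intros lam. split. apply forward.
    intros [-> | [-> | [n [Hn [-> | ->]]]]].
    - apply eig_zero.
    - apply eig_one.
    - replace (RtoC (2 / (INR n + 2))) with (RtoC 1 * RtoC (2 / (INR n + 2)))%C by ring.
      apply eig_pm; auto. ring.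
    - replace (RtoC (- (2 / (INR n + 2)))) with (RtoC (-1) * RtoC (2 / (INR n + 2)))%C by (rewrite RtoC_opp; ring).
      apply eig_pm; auto. cpair. }
  split; [exact Hiff|split].
  - apply Hiff. right. right. exists 1%nat. split; [lia|]. left. replace (INR 1 + 2) with 3 by (simpl; ring). reflexivity.
  - intros lam Hl Hn1. apply Hiff in Hl. destruct Hl as [-> | [-> | [n [Hn [-> | ->]]]]].
    + simpl. lra.
    + congruence.
    + simpl. split; auto. apply le_INR in Hn. simpl in Hn.
      apply (Rmult_le_reg_r (INR n + 2)); [lra|]. unfold Rdiv. rewrite Rmult_assoc, Rinv_l by lra. lra.
    + simpl. split; auto. apply le_INR in Hn. simpl in Hn.
      assert (0 < 2 / (INR n + 2))%R by (apply Rdiv_lt_0_compat; lra). lra.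
Qed.
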